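(* Let $\Xi\to C$ be a sequent without stoups (regarded, in the context of $\mathcal{M}'_{2015}$, as a sequent all of whose stoups are empty). Then the following are equivalent: (1) $\Xi\to C$ is derivable in $\mathcal{F}_{2015}$ without cut; (2) $\Xi\to C$ is derivable in $\mathcal{F}_{2015}$, possibly using cut; (3) $\Xi\to C$ is derivable in $\mathcal{M}'_{2015}$ extended with the stoup cut rule; (4) $\Xi\to C$ is derivable in $\mathcal{M}'_{2015}$ (without cut).
   Context: Formulae are built from a countable set of variables and $\mathbf1$ by $\backslash,/,\cdot,\wedge,\vee$ and the unary $\langle\rangle$, $[]^{-1}$, $!$. Calculi with stoups: a stoup is a finite multiset of formulae ($\varnothing$ empty); a tree term is a formula or $[\Xi]$; a meta-formula is $\zeta;\Gamma$ ($\zeta$ a stoup, $\Gamma$ a finite sequence of tree terms, empty $\Lambda$), $\varnothing;\Gamma$ written $\Gamma$; comma is concatenation / multiset union; sequents $\Xi\to C$; $\Xi(\Theta)$ designates an occurrence of a meta-formula $\Theta$ which is $\Xi$ itself or the content of a bracket $[\Theta]$ at any depth. Rules of $\mathcal{M}'_{2015}$: axioms $A\to A$, $\Lambda\to\mathbf1$; ($/L$) from $\zeta_1;\Gamma\to B$ and $\Xi(\zeta_2;\Delta_1,C,\Delta_2)\to D$ infer $\Xi(\zeta_1,\zeta_2;\Delta_1,C/B,\Gamma,\Delta_2)\to D$; ($/R$) from $\zeta;\Gamma,B\to C$ infer $\zeta;\Gamma\to C/B$; ($\backslash L$) from $\zeta_1;\Gamma\to A$ and $\Xi(\zeta_2;\Delta_1,C,\Delta_2)\to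 D$ infer $\Xi(\zeta_1,\zeta_2;\Delta_1,\Gamma,A\backslash C,\Delta_2)\to D$; ($\backslash R$) from $\zeta;A,\Gamma\to C$ infer $\zeta;\Gamma\to A\backslash C$; ($\cdot L$) from $\Xi(\zeta;\Delta_1,A,B,\Delta_2)\to D$ infer $\Xi(\zeta;\Delta_1,A\cdot B,\Delta_2)\to D$; ($\cdot R$) from $\zeta_1;\Delta\to A$, $\zeta_2;\Gamma\to B$ infer $\zeta_1,\zeta_2;\Delta,\Gamma\to A\cdot B$; ($\mathbf1L$) from $\Xi(\zeta;\Delta_1,\Delta_2)\to A$ infer $\Xi(\zeta;\Delta_1,\mathbf1,\Delta_2)\to A$; ($\vee L$) from $\Xi(\zeta;\Delta_1,A_1,\Delta_2)\to C$ and $\Xi(\zeta;\Delta_1,A_2,\Delta_2)\to C$ infer $\Xi(\zeta;\Delta_1,A_1\vee A_2,\Delta_2)\to C$; ($\vee R_i$) from $\Xi\to A_i$ infer $\Xi\to A_1\vee A_2$; ($\wedge L_i$) from $\Xi(\zeta;\Delta_1,A_i,\Delta_2)\to C$ infer $\Xi(\zeta;\Delta_1,A_1\wedge A_2,\Delta_2)\to C$; ($\wedge R$) from $\Xi\to A_1$ and $\Xi\to A_2$ infer $\Xi\to A_1\wedge A_2$; ($[]^{-1}L$) from $\Xi(\zeta;\Delta_1,A,\Delta_2)\to B$ infer $\Xi(\zeta;\Delta_1,[[]^{-1}A],\Delta_2)\to B$; ($[]^{-1}R$) from $[\Xi]\to A$ infer $\Xi\to[]^{-1}A$; ($\langle\rangle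 L$) from $\Xi(\zeta;\Delta_1,[A],\Delta_2)\to B$ infer $\Xi(\zeta;\Delta_1,\langle\rangle A,\Delta_2)\to B$; ($\langle\rangle R$) from $\Xi\to A$ infer $[\Xi]\to\langle\rangle A$; ($!L$) from $\Xi(\zeta,A;\Gamma_1,\Gamma_2)\to B$ infer $\Xi(\zeta;\Gamma_1,!A,\Gamma_2)\to B$; ($!P$) from $\Xi(\zeta;\Gamma_1,A,\Gamma_2)\to B$ infer $\Xi(\zeta,A;\Gamma_1,\Gamma_2)\to B$; ($!R'$) from $\zeta;\Lambda\to B$ infer $\zeta;\Lambda\to!B$, if $\zeta\ne\varnothing$; ($!C'$) from $\Xi(\zeta_1,\zeta_2;\Gamma_1,[\zeta',\zeta_2;\Gamma_2],\Gamma_3)\to C$ infer $\Xi(\zeta_1,\zeta_2,\zeta';\Gamma_1,\Gamma_2,\Gamma_3)\to C$, if $\zeta_2\ne\varnothing$. The stoup cut rule is: from $\xi;\Pi\to A$ and $\Xi(\zeta;\Gamma_1,A,\Gamma_2)\to C$ infer $\Xi(\xi,\zeta;\Gamma_1,\Pi,\Gamma_2)\to C$. Stoup-free calculus $\mathcal{F}_{2015}$: meta-formulae are finite sequences of tree terms; rules are the stoup-free versions of the rules above other than $!L,!P,!R',!C'$ (drop all stoups), together with ($!L$) from $\Xi(\Delta_1,A,\Delta_2)\to C$ infer $\Xi(\Delta_1,!A,\Delta_2)\to C$; ($!P_1$) from $\Xi(\Delta_1,!A,\Phi,\Delta_2)\to C$ infer $\Xi(\Delta_1,\Phi,!A,\Delta_2)\to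 C$; ($!P_2$) the converse; ($!R$) from $!A_1,\dots,!A_n\to B$ infer $!A_1,\dots,!A_n\to!B$ ($n\ge1$); ($!C$) from $\Xi(!A_1,\dots,!A_n,\Gamma_1,[!A_1,\dots,!A_n,\Gamma_2],\Gamma_3)\to C$ infer $\Xi(!A_1,\dots,!A_n,\Gamma_1,\Gamma_2,\Gamma_3)\to C$ ($n\geq1$); and the cut rule: from $\Pi\to A$ and $\Xi(\Gamma_1,A,\Gamma_2)\to C$ infer $\Xi(\Gamma_1,\Pi,\Gamma_2)\to C$. *)

(* Defs.v *)
From Stdlib Require Import List Permutation.
Import ListNotations.

Inductive formula : Type :=
| Var   : nat -> formula
| One   : formula
| Under : formula -> formula -> formula   (* Under A C  =  A \ C *)
| Over  : formula -> formula -> formula   (* Over C B   =  C / B *)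
| Prod  : formula -> formula -> formula
| And   : formula -> formula -> formula
| Or    : formula -> formula -> formula
| Diam  : formula -> formula
| BoxI  : formula -> formula
| Bang  : formula -> formula.

(** Tree terms: a formula or a bracketed meta-formula [Xi];
    a meta-formula is a finite sequence of tree terms. *)
Inductive ftt : Type :=
| FF : formula -> ftt
| FB : list ftt -> ftt.

(** One-hole contexts Xi(_): the hole is the whole meta-formula or the
    content of a bracket at any depth. *)
Inductive fctx : Type :=
| FHole : fctx
| FIn   : list ftt -> fctx -> list ftt -> fctx.

Fixpoint ffill (K : fctx) (T : list ftt) : list ftt :=
  match K with
  | FHole => T
  | FIn G1 K' G2 => G1 ++ FB (ffill K' T) :: G2
  end.

Definition fbangs (As : list formula) : list ftt :=
  map (fun A => FF (Bang A)) As.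

Inductive F_der (c : bool) : list ftt -> formula -> Prop :=
| F_ax A : F_der c [FF A] A
| F_oneR : F_der c [] One
| F_overL K G B D1 C D2 D :
    F_der c G B -> F_der c (ffill K (D1 ++ FF C :: D2)) D ->
    F_der c (ffill K (D1 ++ FF (Over C B) :: G ++ D2)) D
| F_overR G B C :
    F_der c (G ++ [FF B]) C -> F_der c G (Over C B)
| F_underL K G A D1 C D2 D :
    F_der c G A -> F_der c (ffill K (D1 ++ FF C :: D2)) D ->
    F_der c (ffill K (D1 ++ G ++ FF (Under A C) :: D2)) D
| F_underR G A C :
    F_der c (FF A :: G) C -> F_der c G (Under A C)
| F_prodL K D1 A B D2 D :
    F_der c (ffill K (D1 ++ FF A :: FF B :: D2)) D ->
    F_der c (ffill K (D1 ++ FF (Prod A B) :: D2)) D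
| F_prodR De G A B :
    F_der c De A -> F_der c G B -> F_der c (De ++ G) (Prod A B)
| F_oneL K D1 D2 A :
    F_der c (ffill K (D1 ++ D2)) A ->
    F_der c (ffill K (D1 ++ FF One :: D2)) A
| F_orL K D1 A1 A2 D2 C :
    F_der c (ffill K (D1 ++ FF A1 :: D2)) C ->
    F_der c (ffill K (D1 ++ FF A2 :: D2)) C ->
    F_der c (ffill K (D1 ++ FF (Or A1 A2) :: D2)) C
| F_orR1 X A1 A2 : F_der c X A1 -> F_der c X (Or A1 A2)
| F_orR2 X A1 A2 : F_der c X A2 -> F_der c X (Or A1 A2)
| F_andL1 K D1 A1 A2 D2 C :
    F_der c (ffill K (D1 ++ FF A1 :: D2)) C ->
    F_der c (ffill K (D1 ++ FF (And A1 A2) :: D2)) C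
| F_andL2 K D1 A1 A2 D2 C :
    F_der c (ffill K (D1 ++ FF A2 :: D2)) C ->
    F_der c (ffill K (D1 ++ FF (And A1 A2) :: D2)) C
| F_andR X A1 A2 : F_der c X A1 -> F_der c X A2 -> F_der c X (And A1 A2)
| F_boxL K D1 A D2 B :
    F_der c (ffill K (D1 ++ FF A :: D2)) B ->
    F_der c (ffill K (D1 ++ FB [FF (BoxI A)] :: D2)) B
| F_boxR X A : F_der c [FB X] A -> F_der c X (BoxI A)
| F_diamL K D1 A D2 B :
    F_der c (ffill K (D1 ++ FB [FF A] :: D2)) B ->
    F_der c (ffill K (D1 ++ FF (Diam A) :: D2)) B
| F_diamR X A : F_der c X A -> F_der c [FB X] (Diam A)
| F_bangL K D1 A D2 C :
    F_der c (ffill K (D1 ++ FF A :: D2)) C ->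
    F_der c (ffill K (D1 ++ FF (Bang A) :: D2)) C
| F_bangP1 K D1 A Phi D2 C :
    F_der c (ffill K (D1 ++ FF (Bang A) :: Phi ++ D2)) C ->
    F_der c (ffill K (D1 ++ Phi ++ FF (Bang A) :: D2)) C
| F_bangP2 K D1 A Phi D2 C :
    F_der c (ffill K (D1 ++ Phi ++ FF (Bang A) :: D2)) C ->
    F_der c (ffill K (D1 ++ FF (Bang A) :: Phi ++ D2)) C
| F_bangR As B :
    As <> [] -> F_der c (fbangs As) B -> F_der c (fbangs As) (Bang B)
| F_bangC K As G1 G2 G3 C :
    As <> [] ->
    F_der c (ffill K (fbangs As ++ G1 ++ FB (fbangs As ++ G2) :: G3)) C ->
    F_der c (ffill K (fbangs As ++ G1 ++ G2 ++ G3)) C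
| F_cut K Pi A G1 G2 C :
    c = true ->
    F_der c Pi A -> F_der c (ffill K (G1 ++ FF A :: G2)) C ->
    F_der c (ffill K (G1 ++ Pi ++ G2)) C.

(** A stoup is a finite multiset of formulae, represented by a list taken
    up to permutation (see [mf_eq] and the rule [M_mset] below). *)
Definition stoup := list formula.

Inductive mtt : Type :=
| MF : formula -> mtt
| MB : stoup -> list mtt -> mtt.

Definition mf : Type := (stoup * list mtt)%type.

Definition mbr (T : mf) : mtt := MB (fst T) (snd T).

Inductive mctx : Type :=
| MHole : mctx
| MIn   : stoup -> list mtt -> mctx -> list mtt -> mctx.

Fixpoint mfill (K : mctx) (T : mf) : mf :=
  match K with
  | MHole => T
  | MIn z G1 K' G2 => (z, G1 ++ mbr (mfill K' T) :: G2)
  end.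

Inductive mtt_eq : mtt -> mtt -> Prop :=
| mtt_eqF A : mtt_eq (MF A) (MF A)
| mtt_eqB z z' G G' :
    Permutation z z' -> Forall2 mtt_eq G G' -> mtt_eq (MB z G) (MB z' G').

Definition mf_eq (T T' : mf) : Prop :=
  Permutation (fst T) (fst T') /\ Forall2 mtt_eq (snd T) (snd T').

Definition mbr1 (A : formula) : mtt := MB [] [MF A].

(** Comma on stoups is multiset union, rendered
    as [++] together with the rule [M_mset] identifying stoups that are
    equal as multisets. *)
Inductive M_der (c : bool) : mf -> formula -> Prop :=
| M_mset X X' C : M_der c X C -> mf_eq X X' -> M_der c X' C
| M_ax A : M_der c ([], [MF A]) A
| M_oneR : M_der c ([], []) One
| M_overL K z1 G B z2 D1 C D2 D :
    M_der c (z1, G) B -> M_der c (mfill K (z2, D1 ++ MF C :: D2)) D ->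
    M_der c (mfill K (z1 ++ z2, D1 ++ MF (Over C B) :: G ++ D2)) D
| M_overR z G B C :
    M_der c (z, G ++ [MF B]) C -> M_der c (z, G) (Over C B)
| M_underL K z1 G A z2 D1 C D2 D :
    M_der c (z1, G) A -> M_der c (mfill K (z2, D1 ++ MF C :: D2)) D ->
    M_der c (mfill K (z1 ++ z2, D1 ++ G ++ MF (Under A C) :: D2)) D
| M_underR z G A C :
    M_der c (z, MF A :: G) C -> M_der c (z, G) (Under A C)
| M_prodL K z D1 A B D2 D :
    M_der c (mfill K (z, D1 ++ MF A :: MF B :: D2)) D ->
    M_der c (mfill K (z, D1 ++ MF (Prod A B) :: D2)) D
| M_prodR z1 De z2 G A B :
    M_der c (z1, De) A -> M_der c (z2, G) B ->
    M_der c (z1 ++ z2, De ++ G) (Prod A B)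
| M_oneL K z D1 D2 A :
    M_der c (mfill K (z, D1 ++ D2)) A ->
    M_der c (mfill K (z, D1 ++ MF One :: D2)) A
| M_orL K z D1 A1 A2 D2 C :
    M_der c (mfill K (z, D1 ++ MF A1 :: D2)) C ->
    M_der c (mfill K (z, D1 ++ MF A2 :: D2)) C ->
    M_der c (mfill K (z, D1 ++ MF (Or A1 A2) :: D2)) C
| M_orR1 X A1 A2 : M_der c X A1 -> M_der c X (Or A1 A2)
| M_orR2 X A1 A2 : M_der c X A2 -> M_der c X (Or A1 A2)
| M_andL1 K z D1 A1 A2 D2 C :
    M_der c (mfill K (z, D1 ++ MF A1 :: D2)) C ->
    M_der c (mfill K (z, D1 ++ MF (And A1 A2) :: D2)) C
| M_andL2 K z D1 A1 A2 D2 C :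
    M_der c (mfill K (z, D1 ++ MF A2 :: D2)) C ->
    M_der c (mfill K (z, D1 ++ MF (And A1 A2) :: D2)) C
| M_andR X A1 A2 : M_der c X A1 -> M_der c X A2 -> M_der c X (And A1 A2)
| M_boxL K z D1 A D2 B :
    M_der c (mfill K (z, D1 ++ MF A :: D2)) B ->
    M_der c (mfill K (z, D1 ++ mbr1 (BoxI A) :: D2)) B
| M_boxR X A : M_der c ([], [mbr X]) A -> M_der c X (BoxI A)
| M_diamL K z D1 A D2 B :
    M_der c (mfill K (z, D1 ++ mbr1 A :: D2)) B ->
    M_der c (mfill K (z, D1 ++ MF (Diam A) :: D2)) B
| M_diamR X A : M_der c X A -> M_der c ([], [mbr X]) (Diam A)
| M_bangL K z A G1 G2 B :
    M_der c (mfill K (z ++ [A], G1 ++ G2)) B ->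
    M_der c (mfill K (z, G1 ++ MF (Bang A) :: G2)) B
| M_bangP K z G1 A G2 B :
    M_der c (mfill K (z, G1 ++ MF A :: G2)) B ->
    M_der c (mfill K (z ++ [A], G1 ++ G2)) B
| M_bangR z B :
    z <> [] -> M_der c (z, []) B -> M_der c (z, []) (Bang B)
| M_bangC K z1 z2 z' G1 G2 G3 C :
    z2 <> [] ->
    M_der c (mfill K (z1 ++ z2, G1 ++ MB (z' ++ z2) G2 :: G3)) C ->
    M_der c (mfill K (z1 ++ z2 ++ z', G1 ++ G2 ++ G3)) C
| M_cut K xi Pi A z G1 G2 C :
    c = true ->
    M_der c (xi, Pi) A -> M_der c (mfill K (z, G1 ++ MF A :: G2)) C ->
    M_der c (mfill K (xi ++ z, G1 ++ Pi ++ G2)) C.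

Fixpoint emb_tt (t : ftt) : mtt :=
  match t with
  | FF A => MF A
  | FB G => MB [] (map emb_tt G)
  end.

Definition emb (X : list ftt) : mf := ([], map emb_tt X).

(* Main.v *)
Require Import Defs.
From Stdlib Require Import List Permutation FunctionalExtensionality Lia.
Import ListNotations.

Definition formula_eq_dec : forall x y : formula, {x = y} + {x <> y}.
Proof. decide equality; apply PeanoNat.Nat.eq_dec. Defined.

Definition sst := formula -> nat.
Definition zero : sst := fun _ => 0.
Definition add (a b : sst) : sst := fun x => a x + b x.
Definition sing (A : formula) : sst := fun x => if formula_eq_dec A x then 1 else 0.
Definition scal (k : nat) (a : sst) : sst := fun x => k * a x.

Ltac stoup_eq := apply functional_extensionality; intro;
  unfold add, zero, sing, scal in *; repeat destruct formula_eq_dec; lia.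

Lemma add_zero_r z : add z zero = z. Proof. stoup_eq. Qed.
Lemma add_zero_l z : add zero z = z. Proof. stoup_eq. Qed.
Lemma add_assoc a b c : add a (add b c) = add (add a b) c. Proof. stoup_eq. Qed.
Lemma add_comm a b : add a b = add b a. Proof. stoup_eq. Qed.

Inductive stt : Type :=
| SF : formula -> stt
| SB : sst -> list stt -> stt.

Definition smf : Type := (sst * list stt)%type.
Definition sbr (X : smf) : stt := SB (fst X) (snd X).

Inductive sctx : Type :=
| SHole : sctx
| SIn : sst -> list stt -> sctx -> list stt -> sctx.

Fixpoint sfill (K : sctx) (X : smf) : smf :=
  match K with
  | SHole => X
  | SIn z G1 K' G2 => (z, G1 ++ sbr (sfill K' X) :: G2)
  end.

Inductive frame : Type := Fr : sctx -> sst -> list stt -> list stt -> frame.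

Definition ffr (f : frame) (X : smf) : smf :=
  match f with Fr K z D1 D2 => sfill K (add z (fst X), D1 ++ snd X ++ D2) end.

Definition cutpos (H : frame) (A : formula) : smf := ffr H (zero, [SF A]).

Inductive S0 : smf -> formula -> Prop :=
| S_ax A : S0 (zero, [SF A]) A
| S_oneR : S0 (zero, []) One
| S_overL f z1 G B C D : S0 (z1, G) B -> S0 (ffr f (zero, [SF C])) D ->
    S0 (ffr f (z1, SF (Over C B) :: G)) D
| S_overR z G B C : S0 (z, G ++ [SF B]) C -> S0 (z, G) (Over C B)
| S_underL f z1 G A C D : S0 (z1, G) A -> S0 (ffr f (zero, [SF C])) D ->
    S0 (ffr f (z1, G ++ [SF (Under A C)])) D
| S_underR z G A C : S0 (z, SF A :: G) C -> S0 (z, G) (Under A C)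
| S_prodL f A B D : S0 (ffr f (zero, [SF A; SF B])) D ->
    S0 (ffr f (zero, [SF (Prod A B)])) D
| S_prodR z1 De z2 G A B : S0 (z1, De) A -> S0 (z2, G) B ->
    S0 (add z1 z2, De ++ G) (Prod A B)
| S_oneL f D : S0 (ffr f (zero, [])) D -> S0 (ffr f (zero, [SF One])) D
| S_orL f A1 A2 D : S0 (ffr f (zero, [SF A1])) D -> S0 (ffr f (zero, [SF A2])) D ->
    S0 (ffr f (zero, [SF (Or A1 A2)])) D
| S_orR1 X A1 A2 : S0 X A1 -> S0 X (Or A1 A2)
| S_orR2 X A1 A2 : S0 X A2 -> S0 X (Or A1 A2)
| S_andL1 f A1 A2 D : S0 (ffr f (zero, [SF A1])) D -> S0 (ffr f (zero, [SF (And A1 A2)])) D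
| S_andL2 f A1 A2 D : S0 (ffr f (zero, [SF A2])) D -> S0 (ffr f (zero, [SF (And A1 A2)])) D
| S_andR X A1 A2 : S0 X A1 -> S0 X A2 -> S0 X (And A1 A2)
| S_boxL f A D : S0 (ffr f (zero, [SF A])) D ->
    S0 (ffr f (zero, [SB zero [SF (BoxI A)]])) D
| S_boxR X A : S0 (zero, [sbr X]) A -> S0 X (BoxI A)
| S_diamL f A D : S0 (ffr f (zero, [SB zero [SF A]])) D ->
    S0 (ffr f (zero, [SF (Diam A)])) D
| S_diamR X A : S0 X A -> S0 (zero, [sbr X]) (Diam A)
| S_bangL f A D : S0 (ffr f (sing A, [])) D -> S0 (ffr f (zero, [SF (Bang A)])) D
| S_bangP f A D : S0 (ffr f (zero, [SF A])) D -> S0 (ffr f (sing A, [])) D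
| S_bangR z B : z <> zero -> S0 (z, []) B -> S0 (z, []) (Bang B)
| S_bangC f z2 z' G2 D : z2 <> zero ->
    S0 (ffr f (z2, [SB (add z' z2) G2])) D -> S0 (ffr f (add z2 z', G2)) D.

Lemma S0_eq X Y C : S0 X C -> X = Y -> S0 Y C.
Proof. intros; subst; auto. Qed.

Lemma app_cons_split {T} (L1 L2 G1 G2 : list T) x :
  L1 ++ L2 = G1 ++ x :: G2 ->
  (exists N, L1 = G1 ++ x :: N /\ G2 = N ++ L2) \/
  (exists N, L2 = N ++ x :: G2 /\ G1 = L1 ++ N).
Proof.
  revert G1; induction L1 as [|a L1 IH]; intros G1 H; simpl in *.
  - right. exists G1. auto.
  - destruct G1 as [|b G1]; simpl in *; inversion H; subst.
    + left. exists L1. auto.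
    + destruct (IH _ H2) as [[N [? ?]]|[N [? ?]]]; subst.
      * left. exists N. auto.
      * right. exists N. auto.
Qed.

Lemma cons_cons_split {T} (E1 E2 E1' E2' : list T) x y :
  E1 ++ x :: E2 = E1' ++ y :: E2' ->
  (E1 = E1' /\ x = y /\ E2 = E2') \/
  (exists N, E1' = E1 ++ x :: N /\ E2 = N ++ y :: E2') \/
  (exists N, E1 = E1' ++ y :: N /\ E2' = N ++ x :: E2).
Proof.
  revert E1'; induction E1 as [|a E1 IH]; intros E1' H; destruct E1' as [|b E1'];
    simpl in *; inversion H; subst.
  - left; auto.
  - right; left. exists E1'. auto.
  - right; right. exists E1. auto.
  - destruct (IH _ H2) as [[? [? ?]]|[[N [? ?]]|[N [? ?]]]]; subst.
    + left; auto.
    + right; left; exists N; auto.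
    + right; right; exists N; auto.
Qed.

Ltac leq := simpl; rewrite ?app_nil_r; repeat (rewrite <- ?app_assoc; simpl); rewrite ?app_nil_r; reflexivity.

Lemma pair_eq {A B} (a a' : A) (b b' : B) : a = a' -> b = b' -> (a, b) = (a', b').
Proof. intros; subst; auto. Qed.

Definition wrapf s E1 E2 (f : frame) : frame :=
  match f with Fr K z D1 D2 => Fr (SIn s E1 K E2) z D1 D2 end.
Lemma ffr_wrap s E1 E2 f X : ffr (wrapf s E1 E2 f) X = (s, E1 ++ sbr (ffr f X) :: E2).
Proof. destruct f; reflexivity. Qed.

Lemma sbr_inj X Y : sbr X = sbr Y -> X = Y.
Proof. destruct X, Y; unfold sbr; simpl; intro H; inversion H; auto. Qed.

Lemma split_occ : forall K z D1 D2 a Y H A,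
  ffr (Fr K z D1 D2) (a, Y) = cutpos H A ->
  (exists H0, (a, Y) = cutpos H0 A /\ forall X, ffr H X = ffr (Fr K z D1 D2) (ffr H0 X)) \/
  (forall X0, exists f', ffr H X0 = ffr f' (a, Y) /\
     forall X, exists Hx, ffr (Fr K z D1 D2) X = cutpos Hx A /\ ffr Hx X0 = ffr f' X).
Proof.
  induction K as [|s E1 K IH E2]; intros z D1 D2 a Y [KH ζ G1 G2] A Heq.
  - destruct KH as [|s E1 KH E2]; unfold cutpos in Heq; simpl in Heq; injection Heq as Hs Hl.
    + rewrite add_zero_r in Hs; subst ζ.
      destruct (app_cons_split _ _ _ _ _ Hl) as [[N [? ?]]|[N [Hl2 ?]]]; subst.
      * right. intros [x0 X0s]. exists (Fr SHole (add z x0) (G1 ++ X0s ++ N) D2). split.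
        -- simpl. apply pair_eq. stoup_eq. leq.
        -- intros [x Xs]. exists (Fr SHole (add z x) G1 (N ++ Xs ++ D2)). split; simpl;
             apply pair_eq; try stoup_eq; leq.
      * destruct (app_cons_split _ _ _ _ _ Hl2) as [[M [? ?]]|[M [? ?]]]; subst.
        -- left. exists (Fr SHole a N M). split.
           ++ unfold cutpos; simpl. apply pair_eq. stoup_eq. auto.
           ++ intros [x Xs]; simpl. apply pair_eq. stoup_eq. leq.
        -- right. intros [x0 X0s]. exists (Fr SHole (add z x0) D1 (M ++ X0s ++ G2)). split.
           ++ simpl. apply pair_eq. stoup_eq. leq.
           ++ intros [x Xs]. exists (Fr SHole (add z x) (D1 ++ Xs ++ M) G2). split; simpl;
                apply pair_eq; try stoup_eq; leq.
    + subst s. set (P := sfill KH _) in Hl.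
      destruct (app_cons_split _ _ _ _ _ Hl) as [[N [? ?]]|[N [Hl2 ?]]]; subst.
      * right. intros X0. exists (Fr SHole z (E1 ++ sbr (ffr (Fr KH ζ G1 G2) X0) :: N) D2). split.
        -- simpl. apply pair_eq. auto. leq.
        -- intros [x Xs]. exists (Fr (SIn (add z x) E1 KH (N ++ Xs ++ D2)) ζ G1 G2). split; simpl;
             apply pair_eq; try stoup_eq; try leq.
      * destruct (app_cons_split _ _ _ _ _ Hl2) as [[M [? ?]]|[M [? ?]]]; subst.
        -- left. exists (Fr (SIn a N KH M) ζ G1 G2). split.
           ++ reflexivity.
           ++ intros [x Xs]; simpl. apply pair_eq. auto. leq.
        -- right. intros X0. exists (Fr SHole z D1 (M ++ sbr (ffr (Fr KH ζ G1 G2) X0) :: E2)). split.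
           ++ simpl. apply pair_eq. auto. leq.
           ++ intros [x Xs]. exists (Fr (SIn (add z x) (D1 ++ Xs ++ M) KH E2) ζ G1 G2). split; simpl;
                apply pair_eq; try stoup_eq; try leq.
  - destruct KH as [|s' E1' KH E2']; unfold cutpos in Heq; simpl in Heq; injection Heq as Hs Hl.
    + rewrite add_zero_r in Hs; subst ζ.
      set (Q := sfill K _) in Hl.
      destruct (app_cons_split _ _ _ _ _ Hl) as [[N [? ?]]|[N [Hl2 ?]]]; subst.
      * right. intros [x0 X0s]. exists (Fr (SIn (add s x0) (G1 ++ X0s ++ N) K E2) z D1 D2). split.
        -- simpl. apply pair_eq. auto. leq.
        -- intros [x Xs]. exists (Fr SHole s G1 (N ++ sbr (ffr (Fr K z D1 D2) (x, Xs)) :: E2)).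
           split; simpl; apply pair_eq; try stoup_eq; try leq.
      * destruct N as [|t N]; simpl in Hl2; inversion Hl2; subst.
        right. intros [x0 X0s]. exists (Fr (SIn (add s x0) E1 K (N ++ X0s ++ G2)) z D1 D2). split.
        -- simpl. apply pair_eq. auto. leq.
        -- intros [x Xs]. exists (Fr SHole s (E1 ++ sbr (ffr (Fr K z D1 D2) (x, Xs)) :: N) G2).
           split; simpl; apply pair_eq; try stoup_eq; try leq.
    + subst s'.
      destruct (cons_cons_split _ _ _ _ _ _ Hl) as [[HE1 [Hb HE2]]|[[N [? ?]]|[N [? ?]]]].
      * subst E1' E2'. apply sbr_inj in Hb.
        destruct (IH z D1 D2 a Y (Fr KH ζ G1 G2) A Hb) as [[H0 [HH0 HX]]|HO].
        -- left. exists H0. split; auto. intros X. simpl. change (sfill K ?p) with (ffr (Fr K z D1 D2) (ffr H0 X)).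
           simpl in HX. rewrite HX. reflexivity.
        -- right. intros X0. destruct (HO X0) as [f'' [Hf1 Hf2]].
           exists (wrapf s E1 E2 f''). split.
           ++ rewrite ffr_wrap. rewrite <- Hf1. reflexivity.
           ++ intros X. destruct (Hf2 X) as [Hx [Hx1 Hx2]]. exists (wrapf s E1 E2 Hx).
              unfold cutpos in *. rewrite !ffr_wrap. rewrite <- Hx1, Hx2. split; reflexivity.
      * subst. right. intros X0.
        exists (Fr (SIn s E1 K (N ++ sbr (ffr (Fr KH ζ G1 G2) X0) :: E2')) z D1 D2). split.
        -- simpl. apply pair_eq; auto. leq.
        -- intros X. exists (wrapf s (E1 ++ sbr (ffr (Fr K z D1 D2) X) :: N) E2' (Fr KH ζ G1 G2)).
           unfold cutpos. rewrite !ffr_wrap. split; simpl; apply pair_eq; auto; leq.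
      * subst. right. intros X0.
        exists (Fr (SIn s (E1' ++ sbr (ffr (Fr KH ζ G1 G2) X0) :: N) K E2) z D1 D2). split.
        -- simpl. apply pair_eq; auto. leq.
        -- intros X. exists (wrapf s E1' (N ++ sbr (ffr (Fr K z D1 D2) X) :: E2) (Fr KH ζ G1 G2)).
           unfold cutpos. rewrite !ffr_wrap. split; simpl; apply pair_eq; auto; leq.
Qed.
Lemma surj {A B} (p : A * B) : p = (fst p, snd p). Proof. destruct p; auto. Qed.

Lemma kapp_ex : forall K1 K2, exists K, forall X, sfill K X = sfill K1 (sfill K2 X).
Proof.
  induction K1 as [|z G1 K1 IH G2]; intros K2.
  - exists K2; auto.
  - destruct (IH K2) as [K HK]. exists (SIn z G1 K G2). intros X; simpl. rewrite HK. auto.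
Qed.

Lemma comp_ex : forall H f, exists g, forall X, ffr H (ffr f X) = ffr g X.
Proof.
  intros [KH ζ G1 G2] [[|s E1 K E2] z D1 D2].
  - exists (Fr KH (add ζ z) (G1 ++ D1) (D2 ++ G2)). intros [x Xs]; simpl.
    f_equal. apply pair_eq. stoup_eq. leq.
  - destruct (kapp_ex KH (SIn (add ζ s) (G1 ++ E1) K (E2 ++ G2))) as [K' HK].
    exists (Fr K' z D1 D2). intros [x Xs]. simpl. rewrite HK. simpl. f_equal. apply pair_eq. auto. leq.
Qed.

Lemma ext_r : forall H L, exists H', forall X, ffr H' X = (fst (ffr H X), snd (ffr H X) ++ L).
Proof.
  intros [[|s E1 K E2] z G1 G2] L.
  - exists (Fr SHole z G1 (G2 ++ L)). intros X; simpl. leq.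
  - exists (Fr (SIn s E1 K (E2 ++ L)) z G1 G2). intros X; simpl. leq.
Qed.

Lemma ext_l : forall H L, exists H', forall X, ffr H' X = (fst (ffr H X), L ++ snd (ffr H X)).
Proof.
  intros [[|s E1 K E2] z G1 G2] L.
  - exists (Fr SHole z (L ++ G1) G2). intros X; simpl. leq.
  - exists (Fr (SIn s (L ++ E1) K E2) z G1 G2). intros X; simpl. leq.
Qed.

Lemma occ_app : forall H0 A z1 z2 L1 L2, cutpos H0 A = (add z1 z2, L1 ++ L2) ->
  (exists H1, cutpos H1 A = (z1, L1) /\ forall X, ffr H0 X = (add (fst (ffr H1 X)) z2, snd (ffr H1 X) ++ L2)) \/
  (exists H2, cutpos H2 A = (z2, L2) /\ forall X, ffr H0 X = (add z1 (fst (ffr H2 X)), L1 ++ snd (ffr H2 X))).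
Proof.
  intros [[|s E1 K E2] ζ G1 G2] A z1 z2 L1 L2 Heq; unfold cutpos in Heq; simpl in Heq;
    injection Heq as Hs Hl.
  - rewrite add_zero_r in Hs; subst ζ. symmetry in Hl.
    destruct (app_cons_split _ _ _ _ _ Hl) as [[N [? ?]]|[N [? ?]]]; subst.
    + left. exists (Fr SHole z1 G1 N). split.
      * unfold cutpos; simpl. apply pair_eq. stoup_eq. auto.
      * intros [x Xs]; simpl. apply pair_eq. stoup_eq. leq.
    + right. exists (Fr SHole z2 N G2). split.
      * unfold cutpos; simpl. apply pair_eq. stoup_eq. auto.
      * intros [x Xs]; simpl. apply pair_eq. stoup_eq. leq.
  - subst s. symmetry in Hl.
    destruct (app_cons_split _ _ _ _ _ Hl) as [[N [? ?]]|[N [? ?]]]; subst.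
    + left. exists (Fr (SIn z1 E1 K N) ζ G1 G2). split.
      * reflexivity.
      * intros X; simpl. apply pair_eq. auto. leq.
    + right. exists (Fr (SIn z2 N K E2) ζ G1 G2). split.
      * reflexivity.
      * intros X; simpl. apply pair_eq. auto. leq.
Qed.

Lemma occ_F : forall H0 A a B, cutpos H0 A = (a, [SF B]) ->
  A = B /\ forall X, ffr H0 X = (add a (fst X), snd X).
Proof.
  intros [[|s E1 K E2] ζ G1 G2] A a B Heq; unfold cutpos in Heq; simpl in Heq;
    injection Heq as Hs Hl.
  - rewrite add_zero_r in Hs; subst ζ.
    destruct G1 as [|t G1]; simpl in Hl; inversion Hl; subst.
    + split; auto. intros X; simpl. rewrite app_nil_r. auto.
    + destruct G1; discriminate.
  - destruct E1 as [|t E1]; simpl in Hl; inversion Hl. destruct E1; discriminate.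
Qed.

Lemma occ_B : forall H0 A a s L, cutpos H0 A = (a, [SB s L]) ->
  exists H1, cutpos H1 A = (s, L) /\ forall X, ffr H0 X = (a, [sbr (ffr H1 X)]).
Proof.
  intros [[|s' E1 K E2] ζ G1 G2] A a s L Heq; unfold cutpos in Heq; simpl in Heq;
    injection Heq as Hs Hl.
  - destruct G1 as [|t G1]; simpl in Hl; inversion Hl. destruct G1; discriminate.
  - subst. destruct E1 as [|t E1]; simpl in Hl; inversion Hl; subst.
    + exists (Fr K ζ G1 G2). split.
      * unfold cutpos; simpl. apply surj.
      * intros X; simpl. auto.
    + destruct E1; discriminate.
Qed.

Lemma occ_nil : forall H0 A a, cutpos H0 A = (a, []) -> False.
Proof.
  intros [[|s' E1 K E2] ζ G1 G2] A a Heq; unfold cutpos in Heq; simpl in Heq;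
    injection Heq as Hs Hl.
  - destruct G1; discriminate.
  - destruct E1; discriminate.
Qed.

Lemma occ_bangC : forall H0 A z2 z' G, cutpos H0 A = (add z2 z', G) ->
  exists H0', cutpos H0' A = (z2, [SB (add z' z2) G]) /\
   forall X, exists z'' G'', ffr H0 X = (add z2 z'', G'') /\ ffr H0' X = (z2, [SB (add z'' z2) G'']).
Proof.
  intros [[|s E1 K E2] ζ G1 G2] A z2 z' G Heq; unfold cutpos in Heq; simpl in Heq;
    injection Heq as Hs Hl.
  - rewrite add_zero_r in Hs; subst ζ G.
    exists (Fr (SIn z2 [] SHole []) (add z' z2) G1 G2). split.
    + unfold cutpos; simpl. unfold sbr; simpl. rewrite add_zero_r. reflexivity.
    + intros [x Xs]. exists (add z' x), (G1 ++ Xs ++ G2). split; simpl.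
      * apply pair_eq; auto. stoup_eq.
      * unfold sbr; simpl. replace (add (add z' z2) x) with (add (add z' x) z2) by stoup_eq. reflexivity.
  - subst s G. exists (Fr (SIn z2 [] (SIn (add z' z2) E1 K E2) []) ζ G1 G2). split.
    + reflexivity.
    + intros X. eexists z', _. split; simpl; reflexivity.
Qed.

Definition PH (A : formula) (X : smf) : Prop :=
 (forall f z1 G C B D, A = Over C B -> S0 (z1, G) B -> S0 (ffr f (zero, [SF C])) D ->
    S0 (ffr f (add z1 (fst X), snd X ++ G)) D) /\
 (forall f z1 G A' C D, A = Under A' C -> S0 (z1, G) A' -> S0 (ffr f (zero, [SF C])) D ->
    S0 (ffr f (add z1 (fst X), G ++ snd X)) D) /\
 (forall f A1 A2 D, A = Prod A1 A2 -> S0 (ffr f (zero, [SF A1; SF A2])) D -> S0 (ffr f X) D) /\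
 (forall f D, A = One -> S0 (ffr f (zero, [])) D -> S0 (ffr f X) D) /\
 (forall f A1 A2 D, A = Or A1 A2 -> S0 (ffr f (zero,[SF A1])) D ->
    S0 (ffr f (zero,[SF A2])) D -> S0 (ffr f X) D) /\
 (forall f A1 A2 D, A = And A1 A2 -> S0 (ffr f (zero,[SF A1])) D -> S0 (ffr f X) D) /\
 (forall f A1 A2 D, A = And A1 A2 -> S0 (ffr f (zero,[SF A2])) D -> S0 (ffr f X) D) /\
 (forall f A' D, A = BoxI A' -> S0 (ffr f (zero,[SF A'])) D -> S0 (ffr f (zero, [sbr X])) D) /\
 (forall f A' D, A = Diam A' -> S0 (ffr f (zero,[SB zero [SF A']])) D -> S0 (ffr f X) D) /\
 (forall f B D, A = Bang B -> S0 (ffr f (sing B, [])) D -> S0 (ffr f X) D).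


Lemma split_occ' : forall f a Y H A,
  ffr f (a, Y) = cutpos H A ->
  (exists H0, (a, Y) = cutpos H0 A /\ forall X, ffr H X = ffr f (ffr H0 X)) \/
  (forall X0, exists f', ffr H X0 = ffr f' (a, Y) /\
     forall X, exists Hx, ffr f X = cutpos Hx A /\ ffr Hx X0 = ffr f' X).
Proof. intros [K z D1 D2]; apply split_occ. Qed.

Ltac outp E2 IH Y := let Hx := fresh "Hx" in let Hx1 := fresh "Hx1" in let Hx2 := fresh "Hx2" in
  destruct (E2 Y) as [Hx [Hx1 Hx2]]; rewrite <- Hx2; apply IH; exact Hx1.

Ltac feq := first [ reflexivity | (f_equal; rewrite ?add_zero_l, <- ?surj; reflexivity) | (f_equal; try (apply pair_eq); try stoup_eq; try leq) ].

Lemma cutpos_comp : forall f H0 A, exists g, cutpos g A = ffr f (cutpos H0 A) /\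
  forall X, ffr g X = ffr f (ffr H0 X).
Proof. intros f H0 A. destruct (comp_ex f H0) as [g Hg]. exists g. unfold cutpos. rewrite Hg. auto. Qed.

Lemma RC : forall A X, S0 X A -> PH A X -> forall T D, S0 T D -> forall H, T = cutpos H A -> S0 (ffr H X) D.
Proof.
  intros A X dL ph T D0 dR.
  destruct ph as (p_over & p_under & p_prod & p_one & p_or & p_and1 & p_and2 & p_box & p_diam & p_bang).
  induction dR as [A0|
    |f z1 G B C D dR1 IH1 dR2 IH2
    |z G B C dR IH
    |f z1 G A' C D dR1 IH1 dR2 IH2
    |z G A' C dR IH
    |f A1 A2 D dR IH
    |z1 De z2 G A1 A2 dR1 IH1 dR2 IH2
    |f D dR IH
    |f A1 A2 D dR1 IH1 dR2 IH2
    |Y A1 A2 dR IH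
    |Y A1 A2 dR IH
    |f A1 A2 D dR IH
    |f A1 A2 D dR IH
    |Y A1 A2 dR1 IH1 dR2 IH2
    |f A' D dR IH
    |Y A' dR IH
    |f A' D dR IH
    |Y A' dR IH
    |f A' D dR IH
    |f A' D dR IH
    |z B nz dR IH
    |f z2 z' G2 D nz dR IH]; intros H Heq.
  -
    symmetry in Heq. destruct (occ_F _ _ _ _ Heq) as [-> HX]. rewrite HX, add_zero_l, <- surj. exact dL.
  - symmetry in Heq. destruct (occ_nil _ _ _ Heq).
  -
    destruct (split_occ' _ _ _ _ _ Heq) as [[H0 [HH0 HX]]|HO].
    + rewrite HX.
      assert (E: cutpos H0 A = (add zero z1, [SF (Over C B)] ++ G)) by (rewrite <- HH0, add_zero_l; reflexivity).
      destruct (occ_app _ _ _ _ _ _ E) as [[H1 [E1 F1]]|[H2 [E2 F2]]].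
      * destruct (occ_F _ _ _ _ E1) as [-> G1]. rewrite F1, G1. simpl.
        eapply S0_eq. apply (p_over f z1 G C B D eq_refl dR1 dR2). feq.
      * rewrite F2. eapply S0_eq. apply S_overL with (z1 := fst (ffr H2 X)) (G := snd (ffr H2 X)).
        -- rewrite <- surj. apply IH1. auto.
        -- exact dR2.
        -- feq.
    + destruct (HO X) as [f' [E1 E2]]. rewrite E1. apply S_overL; [exact dR1|]. outp E2 IH2 (zero, [SF C]).
  -
    destruct (ext_r H [SF B]) as [H' EH']. rewrite (surj (ffr H X)). apply S_overR.
    rewrite <- EH'. apply IH. unfold cutpos. rewrite EH'. fold (cutpos H A). rewrite <- Heq. auto.
  -
    destruct (split_occ' _ _ _ _ _ Heq) as [[H0 [HH0 HX]]|HO].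
    + rewrite HX.
      assert (E: cutpos H0 A = (add z1 zero, G ++ [SF (Under A' C)])) by (rewrite <- HH0, add_zero_r; reflexivity).
      destruct (occ_app _ _ _ _ _ _ E) as [[H1 [E1 F1]]|[H2 [E2 F2]]].
      * rewrite F1. eapply S0_eq. apply S_underL with (z1 := fst (ffr H1 X)) (G := snd (ffr H1 X)).
        -- rewrite <- surj. apply IH1. auto.
        -- exact dR2.
        -- feq.
      * destruct (occ_F _ _ _ _ E2) as [-> G2]. rewrite F2, G2. simpl.
        eapply S0_eq. apply (p_under f z1 G A' C D eq_refl dR1 dR2). feq.
    + destruct (HO X) as [f' [E1 E2]]. rewrite E1. apply S_underL; [exact dR1|]. outp E2 IH2 (zero, [SF C]).
  -
    destruct (ext_l H [SF A']) as [H' EH']. rewrite (surj (ffr H X)). apply S_underR.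
    change (SF A' :: snd (ffr H X)) with ([SF A'] ++ snd (ffr H X)).
    rewrite <- EH'. apply IH. unfold cutpos. rewrite EH'. fold (cutpos H A). rewrite <- Heq. auto.
  -
    destruct (split_occ' _ _ _ _ _ Heq) as [[H0 [HH0 HX]]|HO].
    + rewrite HX. symmetry in HH0. destruct (occ_F _ _ _ _ HH0) as [-> G1]. rewrite G1.
      eapply S0_eq. apply (p_prod f A1 A2 D eq_refl dR). feq.
    + destruct (HO X) as [f' [E1 E2]]. rewrite E1. apply S_prodL. outp E2 IH (zero, [SF A1; SF A2]).
  -
    symmetry in Heq. destruct (occ_app _ _ _ _ _ _ Heq) as [[H1 [E1 F1]]|[H2 [E2 F2]]].
    + rewrite F1. apply S_prodR; auto. rewrite <- surj. apply IH1. auto.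
    + rewrite F2. apply S_prodR; auto. rewrite <- surj. apply IH2. auto.
  -
    destruct (split_occ' _ _ _ _ _ Heq) as [[H0 [HH0 HX]]|HO].
    + rewrite HX. symmetry in HH0. destruct (occ_F _ _ _ _ HH0) as [-> G1]. rewrite G1.
      eapply S0_eq. apply (p_one f D eq_refl dR). feq.
    + destruct (HO X) as [f' [E1 E2]]. rewrite E1. apply S_oneL. outp E2 IH (zero, @nil stt).
  -
    destruct (split_occ' _ _ _ _ _ Heq) as [[H0 [HH0 HX]]|HO].
    + rewrite HX. symmetry in HH0. destruct (occ_F _ _ _ _ HH0) as [-> G1]. rewrite G1.
      eapply S0_eq. apply (p_or f A1 A2 D eq_refl dR1 dR2). feq.
    + destruct (HO X) as [f' [E1 E2]]. rewrite E1. apply S_orL.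
      * outp E2 IH1 (zero, [SF A1]).
      * outp E2 IH2 (zero, [SF A2]).
  - apply S_orR1. auto.
  - apply S_orR2. auto.
  -
    destruct (split_occ' _ _ _ _ _ Heq) as [[H0 [HH0 HX]]|HO].
    + rewrite HX. symmetry in HH0. destruct (occ_F _ _ _ _ HH0) as [-> G1]. rewrite G1.
      eapply S0_eq. apply (p_and1 f A1 A2 D eq_refl dR). feq.
    + destruct (HO X) as [f' [E1 E2]]. rewrite E1. apply S_andL1. outp E2 IH (zero, [SF A1]).
  -
    destruct (split_occ' _ _ _ _ _ Heq) as [[H0 [HH0 HX]]|HO].
    + rewrite HX. symmetry in HH0. destruct (occ_F _ _ _ _ HH0) as [-> G1]. rewrite G1.
      eapply S0_eq. apply (p_and2 f A1 A2 D eq_refl dR). feq.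
    + destruct (HO X) as [f' [E1 E2]]. rewrite E1. apply S_andL2. outp E2 IH (zero, [SF A2]).
  - apply S_andR; auto.
  -
    destruct (split_occ' _ _ _ _ _ Heq) as [[H0 [HH0 HX]]|HO].
    + rewrite HX. symmetry in HH0. destruct (occ_B _ _ _ _ _ HH0) as [H1 [E1 F1]].
      destruct (occ_F _ _ _ _ E1) as [-> G1]. rewrite F1, G1.
      eapply S0_eq. apply (p_box f A' D eq_refl dR). unfold sbr; simpl. rewrite add_zero_l. reflexivity.
    + destruct (HO X) as [f' [E1 E2]]. rewrite E1. apply S_boxL. outp E2 IH (zero, [SF A']).
  -
    apply S_boxR.
    assert (E := ffr_wrap zero [] [] H X). simpl in E. rewrite <- E. apply IH.
    unfold cutpos. rewrite ffr_wrap. fold (cutpos H A). rewrite <- Heq. reflexivity.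
  -
    destruct (split_occ' _ _ _ _ _ Heq) as [[H0 [HH0 HX]]|HO].
    + rewrite HX. symmetry in HH0. destruct (occ_F _ _ _ _ HH0) as [-> G1]. rewrite G1.
      eapply S0_eq. apply (p_diam f A' D eq_refl dR). feq.
    + destruct (HO X) as [f' [E1 E2]]. rewrite E1. apply S_diamL. outp E2 IH (zero, [SB zero [SF A']]).
  -
    symmetry in Heq. unfold sbr in Heq. destruct (occ_B _ _ _ _ _ Heq) as [H1 [E1 F1]].
    rewrite F1. apply S_diamR. apply IH. rewrite E1. apply surj.
  -
    destruct (split_occ' _ _ _ _ _ Heq) as [[H0 [HH0 HX]]|HO].
    + rewrite HX. symmetry in HH0. destruct (occ_F _ _ _ _ HH0) as [-> G1]. rewrite G1.
      eapply S0_eq. apply (p_bang f A' D eq_refl dR). feq.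
    + destruct (HO X) as [f' [E1 E2]]. rewrite E1. apply S_bangL. outp E2 IH (sing A', @nil stt).
  -
    destruct (split_occ' _ _ _ _ _ Heq) as [[H0 [HH0 HX]]|HO].
    + symmetry in HH0. destruct (occ_nil _ _ _ HH0).
    + destruct (HO X) as [f' [E1 E2]]. rewrite E1. apply S_bangP. outp E2 IH (zero, [SF A']).
  - symmetry in Heq. destruct (occ_nil _ _ _ Heq).
  -
    destruct (split_occ' _ _ _ _ _ Heq) as [[H0 [HH0 HX]]|HO].
    + rewrite HX. symmetry in HH0. destruct (occ_bangC _ _ _ _ _ HH0) as [H0' [E1 F1]].
      destruct (F1 X) as [z'' [G'' [F2 F3]]]. rewrite F2.
      apply S_bangC; auto. rewrite <- F3.
      destruct (cutpos_comp f H0' A) as [g [Hg1 Hg2]]. rewrite <- Hg2. apply IH.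
      rewrite Hg1, E1. auto.
    + destruct (HO X) as [f' [E1 E2]]. rewrite E1. apply S_bangC; auto. outp E2 IH (z2, [SB (add z' z2) G2]).
Qed.

Definition P_I (A : formula) : Prop :=
  forall X, S0 X A -> forall H E, S0 (cutpos H A) E -> S0 (ffr H X) E.

Section Sub.
Variable (A : formula) (xi : sst).

Definition subS (s s' : sst) := exists r k, s = add r (scal k (sing A)) /\ s' = add r (scal k xi).

Inductive SubT : stt -> stt -> Prop :=
| SubF B : SubT (SF B) (SF B)
| SubB s s' L L' : subS s s' -> SubL L L' -> SubT (SB s L) (SB s' L')
with SubL : list stt -> list stt -> Prop :=
| SubNil : SubL [] []
| SubCons t t' L L' : SubT t t' -> SubL L L' -> SubL (t :: L) (t' :: L').

Definition SubM (X Y : smf) := subS (fst X) (fst Y) /\ SubL (snd X) (snd Y).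

Lemma subS_refl s : subS s s.
Proof. exists s, 0. split; stoup_eq. Qed.

Lemma subS_add a a' b b' : subS a a' -> subS b b' -> subS (add a b) (add a' b').
Proof.
  intros [r1 [k1 [-> ->]]] [r2 [k2 [-> ->]]]. exists (add r1 r2), (k1 + k2).
  split; apply functional_extensionality; intro x; unfold add, scal; nia.
Qed.

Lemma subS_add_inv z a s' : subS (add z a) s' -> exists z' a', s' = add z' a' /\ subS z z' /\ subS a a'.
Proof.
  intros [r [k [E ->]]].
  assert (Ex : forall x, z x + a x = r x + k * sing A x) by (intro x; apply (f_equal (fun g => g x)) in E; exact E).
  set (k1 := Nat.min k (z A)). set (k2 := k - k1).
  assert (HA := Ex A). unfold sing in HA. destruct (formula_eq_dec A A) as [_|n]; [|congruence].
  exists (add (fun x => z x - k1 * sing A x) (scal k1 xi)), (add (fun x => a x - k2 * sing A x) (scal k2 xi)).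
  split; [|split].
  - apply functional_extensionality; intro x. unfold add, scal.
    specialize (Ex x). unfold sing in *. destruct (formula_eq_dec A x); subst; nia.
  - exists (fun x => z x - k1 * sing A x), k1. split; auto.
    apply functional_extensionality; intro x. unfold add, scal, sing. destruct (formula_eq_dec A x); subst; nia.
  - exists (fun x => a x - k2 * sing A x), k2. split; auto.
    apply functional_extensionality; intro x. unfold add, scal, sing. destruct (formula_eq_dec A x); subst; nia.
Qed.

Lemma subS_zero_inv s' : subS zero s' -> s' = zero.
Proof.
  intros [r [k [E ->]]].
  assert (Ex : forall x, 0 = r x + k * sing A x) by (intro x; apply (f_equal (fun g => g x)) in E; exact E).
  assert (HA := Ex A). unfold sing in HA. destruct (formula_eq_dec A A) as [_|n]; [|congruence].
  apply functional_extensionality; intro x. unfold add, scal, zero. specialize (Ex x). nia.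
Qed.

Lemma subS_sing_inv B s' : subS (sing B) s' -> s' = sing B \/ (B = A /\ s' = xi).
Proof.
  intros [r [k [E ->]]].
  assert (Ex : forall x, sing B x = r x + k * sing A x) by (intro x; apply (f_equal (fun g => g x)) in E; exact E).
  assert (HA := Ex A). unfold sing in HA at 2. destruct (formula_eq_dec A A) as [_|n]; [|congruence].
  destruct k as [|[|k]].
  - left. apply functional_extensionality; intro x. unfold add, scal. specialize (Ex x). lia.
  - unfold sing in HA. destruct (formula_eq_dec B A) as [->|n]; [|lia].
    right. split; auto. apply functional_extensionality; intro x. unfold add, scal.
    specialize (Ex x). unfold sing in Ex. destruct (formula_eq_dec A x); subst; lia.
  - unfold sing in HA. destruct (formula_eq_dec B A); lia.
Qed.

Lemma subS_nz s s' : xi <> zero -> subS s s' -> s <> zero -> s' <> zero.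
Proof.
  intros Hxi [r [k [-> ->]]] Hs E.
  assert (Ex : forall x, r x + k * xi x = 0) by (intro x; apply (f_equal (fun g => g x)) in E; exact E).
  destruct k.
  - apply Hs. apply functional_extensionality; intro x. unfold add, scal, zero. specialize (Ex x). lia.
  - apply Hxi. apply functional_extensionality; intro x. unfold zero. specialize (Ex x). nia.
Qed.

Lemma SubL_app L1 L1' L2 L2' : SubL L1 L1' -> SubL L2 L2' -> SubL (L1 ++ L2) (L1' ++ L2').
Proof. induction 1; simpl; auto. intros; constructor; auto. Qed.

Lemma SubL_app_inv L1 L2 L' : SubL (L1 ++ L2) L' ->
  exists L1' L2', L' = L1' ++ L2' /\ SubL L1 L1' /\ SubL L2 L2'.
Proof.
  revert L'; induction L1 as [|t L1 IH]; intros L' H; simpl in *.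
  - exists [], L'. repeat split; auto. constructor.
  - inversion H; subst. destruct (IH _ H4) as [L1' [L2' [-> [? ?]]]].
    exists (t' :: L1'), L2'. repeat split; auto. constructor; auto.
Qed.

Lemma SubL_cons_inv t L L' : SubL (t :: L) L' -> exists t' L'', L' = t' :: L'' /\ SubT t t' /\ SubL L L''.
Proof. intros H; inversion H; subst; eauto. Qed.

Lemma SubL_nil_inv L' : SubL [] L' -> L' = [].
Proof. intros H; inversion H; auto. Qed.

Lemma SubT_F_inv B t' : SubT (SF B) t' -> t' = SF B.
Proof. intros H; inversion H; auto. Qed.

Lemma SubT_B_inv s L t' : SubT (SB s L) t' -> exists s' L', t' = SB s' L' /\ subS s s' /\ SubL L L'.
Proof. intros H; inversion H; subst; eauto. Qed.

Fixpoint SubT_refl (t : stt) : SubT t t :=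
  match t with
  | SF B => SubF B
  | SB s L => SubB s s L L (subS_refl s)
      ((fix go (L : list stt) : SubL L L :=
          match L with [] => SubNil | t :: L => SubCons t t L L (SubT_refl t) (go L) end) L)
  end.

Lemma SubL_refl L : SubL L L.
Proof. induction L; constructor; auto. apply SubT_refl. Qed.

Definition SubFr (f f' : frame) := forall b b' W W', subS b b' -> SubL W W' -> SubM (ffr f (b, W)) (ffr f' (b', W')).

Lemma SubFr_refl f : SubFr f f.
Proof.
  destruct f as [K z D1 D2]. revert z D1 D2. induction K as [|s E1 K IH E2]; intros z D1 D2 b b' W W' Hb HW.
  - split; simpl. apply subS_add; auto. apply subS_refl.
    apply SubL_app. apply SubL_refl. apply SubL_app; auto. apply SubL_refl.
  - split; simpl. apply subS_refl. apply SubL_app. apply SubL_refl. constructor. 2: apply SubL_refl.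
    destruct (IH z D1 D2 b b' W W' Hb HW). constructor; auto.
Qed.

Lemma Sub_ffr_inv f a Y T' : SubM (ffr f (a, Y)) T' ->
  exists f' a' Y', T' = ffr f' (a', Y') /\ subS a a' /\ SubL Y Y' /\ SubFr f f'.
Proof.
  destruct f as [K z D1 D2]. revert T'. induction K as [|s E1 K IH E2]; intros [s' L'] [Hs HL]; simpl in *.
  - destruct (subS_add_inv _ _ _ Hs) as [z' [a' [-> [Hz Ha]]]].
    destruct (SubL_app_inv _ _ _ HL) as [D1' [R [-> [HD1 HR]]]].
    destruct (SubL_app_inv _ _ _ HR) as [Y' [D2' [-> [HY HD2]]]].
    exists (Fr SHole z' D1' D2'), a', Y'. repeat split; auto.
    1: (simpl; apply subS_add; auto). simpl. apply SubL_app; auto. apply SubL_app; auto.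
  - destruct (SubL_app_inv _ _ _ HL) as [E1' [R [-> [HE1 HR]]]].
    destruct (SubL_cons_inv _ _ _ HR) as [t' [E2' [-> [Ht HE2]]]].
    destruct (SubT_B_inv _ _ _ Ht) as [p1 [p2 [-> [Hp1 Hp2]]]].
    destruct (IH (p1, p2)) as [f'' [a' [Y' [E [Ha [HY HF]]]]]]. split; auto.
    exists (wrapf s' E1' E2' f''), a', Y'. split; [|split; [auto|split; [auto|]]].
    + rewrite ffr_wrap. rewrite <- E. reflexivity.
    + intros b b' W W' Hb HW. rewrite ffr_wrap. split; simpl; auto.
      apply SubL_app; auto. constructor; auto. destruct (HF b b' W W' Hb HW). constructor; auto.
Qed.

End Sub.

Lemma SubL_F1 A xi B L' : SubL A xi [SF B] L' -> L' = [SF B].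
Proof.
  intros H. destruct (SubL_cons_inv _ _ _ _ _ H) as [t' [L'' [-> [Ht HL]]]].
  apply SubT_F_inv in Ht. apply SubL_nil_inv in HL. subst; auto.
Qed.

Lemma SubL_F_cons A xi B L L' : SubL A xi (SF B :: L) L' -> exists L'', L' = SF B :: L'' /\ SubL A xi L L''.
Proof.
  intros H. destruct (SubL_cons_inv _ _ _ _ _ H) as [t' [L'' [-> [Ht HL]]]].
  apply SubT_F_inv in Ht. subst; eauto.
Qed.

Lemma cutII A xi : P_I A -> xi <> zero -> S0 (xi, []) A ->
  forall T D, S0 T D -> forall T', SubM A xi T T' -> S0 T' D.
Proof.
  intros PI Hxi dX T D0 dR.
  induction dR as [A0|
    |f z1 G B C D dR1 IH1 dR2 IH2
    |z G B C dR IH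
    |f z1 G A' C D dR1 IH1 dR2 IH2
    |z G A' C dR IH
    |f A1 A2 D dR IH
    |z1 De z2 G A1 A2 dR1 IH1 dR2 IH2
    |f D dR IH
    |f A1 A2 D dR1 IH1 dR2 IH2
    |Y A1 A2 dR IH
    |Y A1 A2 dR IH
    |f A1 A2 D dR IH
    |f A1 A2 D dR IH
    |Y A1 A2 dR1 IH1 dR2 IH2
    |f A' D dR IH
    |Y A' dR IH
    |f A' D dR IH
    |Y A' dR IH
    |f A' D dR IH
    |f A' D dR IH
    |z B nz dR IH
    |f z2 z' G2 D nz dR IH]; intros T' HS;
  try (destruct (Sub_ffr_inv _ _ _ _ _ _ HS) as [f' [a' [Y' [-> [Ha [HY HF]]]]]]);
  try (destruct T' as [s' L']; destruct HS as [Hs HL]; simpl in Hs, HL).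
  - apply subS_zero_inv in Hs; subst. apply SubL_F1 in HL; subst. constructor.
  - apply subS_zero_inv in Hs; subst. apply SubL_nil_inv in HL; subst. constructor.
  - destruct (SubL_F_cons _ _ _ _ _ HY) as [G' [-> HG]]. apply S_overL.
    + apply IH1. split; auto.
    + apply IH2. apply HF. apply subS_refl. apply SubL_refl.
  - apply S_overR. apply IH. split; simpl; auto. apply SubL_app; auto. apply SubL_refl.
  - destruct (SubL_app_inv _ _ _ _ _ HY) as [G' [R [-> [HG HR]]]]. apply SubL_F1 in HR; subst.
    apply S_underL.
    + apply IH1. split; auto.
    + apply IH2. apply HF. apply subS_refl. apply SubL_refl.
  - apply S_underR. apply IH. split; simpl; auto. constructor; auto. apply SubT_refl.
  - apply subS_zero_inv in Ha; subst. apply SubL_F1 in HY; subst. apply S_prodL.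
    apply IH. apply HF. apply subS_refl. apply SubL_refl.
  - destruct (subS_add_inv _ _ _ _ _ Hs) as [a1 [a2 [-> [H1 H2]]]].
    destruct (SubL_app_inv _ _ _ _ _ HL) as [L1 [L2 [-> [HL1 HL2]]]].
    apply S_prodR; [apply IH1|apply IH2]; split; auto.
  - apply subS_zero_inv in Ha; subst. apply SubL_F1 in HY; subst. apply S_oneL.
    apply IH. apply HF. apply subS_refl. apply SubL_refl.
  - apply subS_zero_inv in Ha; subst. apply SubL_F1 in HY; subst. apply S_orL;
    [apply IH1|apply IH2]; apply HF; try apply subS_refl; apply SubL_refl.
  - apply S_orR1. apply IH. split; auto.
  - apply S_orR2. apply IH. split; auto.
  - apply subS_zero_inv in Ha; subst. apply SubL_F1 in HY; subst. apply S_andL1.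
    apply IH. apply HF. apply subS_refl. apply SubL_refl.
  - apply subS_zero_inv in Ha; subst. apply SubL_F1 in HY; subst. apply S_andL2.
    apply IH. apply HF. apply subS_refl. apply SubL_refl.
  - apply S_andR; [apply IH1|apply IH2]; split; auto.
  - apply subS_zero_inv in Ha; subst.
    destruct (SubL_cons_inv _ _ _ _ _ HY) as [t' [L'' [-> [Ht HL]]]]. apply SubL_nil_inv in HL; subst.
    destruct (SubT_B_inv _ _ _ _ _ Ht) as [s' [L' [-> [Hs HL']]]].
    apply subS_zero_inv in Hs; subst. apply SubL_F1 in HL'; subst.
    apply S_boxL. apply IH. apply HF. apply subS_refl. apply SubL_refl.
  - apply S_boxR. apply IH. split; simpl. apply subS_refl. constructor; [|constructor]. constructor; auto.
  - apply subS_zero_inv in Ha; subst. apply SubL_F1 in HY; subst. apply S_diamL.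
    apply IH. apply HF. apply subS_refl. apply SubL_refl.
  - apply subS_zero_inv in Hs; subst.
    destruct (SubL_cons_inv _ _ _ _ _ HL) as [t' [L'' [-> [Ht HL2]]]]. apply SubL_nil_inv in HL2; subst.
    destruct (SubT_B_inv _ _ _ _ _ Ht) as [p1 [p2 [-> [Hp1 Hp2]]]].
    change (SB p1 p2) with (sbr (p1, p2)). apply S_diamR. apply IH. split; auto.
  - apply subS_zero_inv in Ha; subst. apply SubL_F1 in HY; subst. apply S_bangL.
    apply IH. apply HF. apply subS_refl. constructor.
  - apply SubL_nil_inv in HY; subst. destruct (subS_sing_inv _ _ _ _ Ha) as [->|[-> ->]].
    + apply S_bangP. apply IH. apply HF. apply subS_refl. apply SubL_refl.
    + apply PI; auto. apply IH. apply HF. apply subS_refl. apply SubL_refl.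
  - apply SubL_nil_inv in HL; subst. apply S_bangR.
    + apply (subS_nz A xi z s'); auto.
    + apply IH. split; simpl; auto. constructor.
  - destruct (subS_add_inv _ _ _ _ _ Ha) as [a2 [a3 [-> [H2 H3]]]]. apply S_bangC.
    + apply (subS_nz A xi z2 a2); auto.
    + apply IH. apply HF; auto. constructor; [|constructor]. constructor; auto. apply subS_add; auto.
Qed.

Fixpoint fsize (A : formula) : nat :=
  match A with
  | Var _ | One => 1
  | Under a b | Over a b | Prod a b | And a b | Or a b => S (fsize a + fsize b)
  | Diam a | BoxI a | Bang a => S (fsize a)
  end.

Lemma bracket_frame : forall f, exists g, forall W, ffr g W = ffr f (zero, [SB (fst W) (snd W)]).
Proof.
  intros [K z D1 D2]. destruct (kapp_ex K (SIn (add z zero) D1 SHole D2)) as [K' HK].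
  exists (Fr K' zero [] []). intros [w Ws]. simpl. rewrite HK. simpl. f_equal.
  unfold sbr; simpl. rewrite add_zero_l, app_nil_r. reflexivity.
Qed.

Ltac peq := first [reflexivity | (f_equal; apply pair_eq; [try stoup_eq | try leq]) | (apply pair_eq; [try stoup_eq | try leq])].

Lemma PH_overR z G B C : S0 (z, G ++ [SF B]) C -> P_I B -> P_I C -> PH (Over C B) (z, G).
Proof.
  intros d PB PC. unfold PH; repeat split; try (intros; discriminate).
  intros f z1 G' C' B' D Heq d1 d2; injection Heq as <- <-.
  assert (d3 : S0 (ffr (Fr SHole z G []) (z1, G')) C).
  { apply (PB (z1, G') d1 (Fr SHole z G []) C). eapply S0_eq; [exact d|]. unfold cutpos; simpl. peq. }
  eapply S0_eq. apply (PC _ d3 f D d2). simpl. peq.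
Qed.

Lemma PH_underR z G A C : S0 (z, SF A :: G) C -> P_I A -> P_I C -> PH (Under A C) (z, G).
Proof.
  intros d PA PC. unfold PH; repeat split; try (intros; discriminate).
  intros f z1 G' A' C' D Heq d1 d2; injection Heq as <- <-.
  assert (d3 : S0 (ffr (Fr SHole z [] G) (z1, G')) C).
  { apply (PA (z1, G') d1 (Fr SHole z [] G) C). eapply S0_eq; [exact d|]. unfold cutpos; simpl. peq. }
  eapply S0_eq. apply (PC _ d3 f D d2). simpl. peq.
Qed.

Lemma PH_prodR z1 De z2 G A1 A2 : S0 (z1, De) A1 -> S0 (z2, G) A2 -> P_I A1 -> P_I A2 ->
  PH (Prod A1 A2) (add z1 z2, De ++ G).
Proof.
  intros d1 d2 P1 P2. unfold PH; repeat split; try (intros; discriminate).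
  intros [K z D1 D2] B1 B2 D Heq d; injection Heq as <- <-.
  assert (d3 : S0 (ffr (Fr K z D1 (SF A2 :: D2)) (z1, De)) D).
  { apply (P1 _ d1). eapply S0_eq; [exact d|]. unfold cutpos; simpl. peq. }
  assert (d4 : S0 (ffr (Fr K (add z z1) (D1 ++ De) D2) (z2, G)) D).
  { apply (P2 _ d2). eapply S0_eq; [exact d3|]. unfold cutpos; simpl. peq. }
  eapply S0_eq; [exact d4|]. simpl. peq.
Qed.

Lemma PH_oneR : PH One (zero, []).
Proof. unfold PH; repeat split; try (intros; discriminate). intros f D _ d; exact d. Qed.

Lemma PH_orR1 X A1 A2 : S0 X A1 -> P_I A1 -> PH (Or A1 A2) X.
Proof.
  intros dX P1. unfold PH; repeat split; try (intros; discriminate).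
  intros f B1 B2 D Heq d1 d2; injection Heq as <- <-. exact (P1 X dX f D d1).
Qed.

Lemma PH_orR2 X A1 A2 : S0 X A2 -> P_I A2 -> PH (Or A1 A2) X.
Proof.
  intros dX P2. unfold PH; repeat split; try (intros; discriminate).
  intros f B1 B2 D Heq d1 d2; injection Heq as <- <-. exact (P2 X dX f D d2).
Qed.

Lemma PH_andR X A1 A2 : S0 X A1 -> S0 X A2 -> P_I A1 -> P_I A2 -> PH (And A1 A2) X.
Proof.
  intros dX1 dX2 P1 P2. unfold PH; repeat split; try (intros; discriminate).
  - intros f B1 B2 D Heq d1; injection Heq as <- <-. exact (P1 X dX1 f D d1).
  - intros f B1 B2 D Heq d1; injection Heq as <- <-. exact (P2 X dX2 f D d1).
Qed.

Lemma PH_boxR X A : S0 (zero, [sbr X]) A -> P_I A -> PH (BoxI A) X.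
Proof.
  intros dX PA. unfold PH; repeat split; try (intros; discriminate).
  intros f A' D Heq d; injection Heq as <-. exact (PA _ dX f D d).
Qed.

Lemma PH_diamR Y A : S0 Y A -> P_I A -> PH (Diam A) (zero, [sbr Y]).
Proof.
  intros dY PA. unfold PH; repeat split; try (intros; discriminate).
  intros f A' D Heq d; injection Heq as <-.
  destruct (bracket_frame f) as [g Hg].
  assert (d' : S0 (cutpos g A) D). { unfold cutpos. rewrite Hg. exact d. }
  assert (R := PA Y dY g D d'). rewrite Hg in R. exact R.
Qed.

Lemma PH_bangR z B : z <> zero -> S0 (z, []) B -> P_I B -> PH (Bang B) (z, []).
Proof.
  intros nz dz PB. unfold PH; repeat split; try (intros; discriminate).
  intros f B' D Heq d; injection Heq as <-.
  apply (cutII B z PB nz dz _ _ d). apply SubFr_refl.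
  - exists zero, 1. split; stoup_eq.
  - constructor.
Qed.

Lemma cut_gen : forall X D, S0 X D -> (forall B, fsize B < fsize D -> P_I B) ->
  forall H E, S0 (cutpos H D) E -> S0 (ffr H X) E.
Proof.
  intros X D0 dL.
  induction dL as [A0|
    |f z1 G B C D dR1 IH1 dR2 IH2
    |z G B C dR IH
    |f z1 G A' C D dR1 IH1 dR2 IH2
    |z G A' C dR IH
    |f A1 A2 D dR IH
    |z1 De z2 G A1 A2 dR1 IH1 dR2 IH2
    |f D dR IH
    |f A1 A2 D dR1 IH1 dR2 IH2
    |Y A1 A2 dR IH
    |Y A1 A2 dR IH
    |f A1 A2 D dR IH
    |f A1 A2 D dR IH
    |Y A1 A2 dR1 IH1 dR2 IH2
    |f A' D dR IH
    |Y A' dR IH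
    |f A' D dR IH
    |Y A' dR IH
    |f A' D dR IH
    |f A' D dR IH
    |z B nz dR IH
    |f z2 z' G2 D nz dR IH]; intros Hsm H E dC;
  try (destruct (comp_ex H f) as [g Hg]; rewrite Hg).
  - exact dC.
  - exact (RC _ _ S_oneR PH_oneR _ _ dC H eq_refl).
  - apply S_overL; auto. rewrite <- Hg. apply IH2; auto.
  - refine (RC _ _ (S_overR _ _ _ _ dR) (PH_overR _ _ _ _ dR _ _) _ _ dC H eq_refl);
      apply Hsm; simpl; lia.
  - apply S_underL; auto. rewrite <- Hg. apply IH2; auto.
  - refine (RC _ _ (S_underR _ _ _ _ dR) (PH_underR _ _ _ _ dR _ _) _ _ dC H eq_refl);
      apply Hsm; simpl; lia.
  - apply S_prodL. rewrite <- Hg. apply IH; auto.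
  - refine (RC _ _ (S_prodR _ _ _ _ _ _ dR1 dR2) (PH_prodR _ _ _ _ _ _ dR1 dR2 _ _) _ _ dC H eq_refl);
      apply Hsm; simpl; lia.
  - apply S_oneL. rewrite <- Hg. apply IH; auto.
  - apply S_orL; rewrite <- Hg; [apply IH1|apply IH2]; auto.
  - refine (RC _ _ (S_orR1 _ _ _ dR) (PH_orR1 _ _ _ dR _) _ _ dC H eq_refl); apply Hsm; simpl; lia.
  - refine (RC _ _ (S_orR2 _ _ _ dR) (PH_orR2 _ _ _ dR _) _ _ dC H eq_refl); apply Hsm; simpl; lia.
  - apply S_andL1. rewrite <- Hg. apply IH; auto.
  - apply S_andL2. rewrite <- Hg. apply IH; auto.
  - refine (RC _ _ (S_andR _ _ _ dR1 dR2) (PH_andR _ _ _ dR1 dR2 _ _) _ _ dC H eq_refl);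
      apply Hsm; simpl; lia.
  - apply S_boxL. rewrite <- Hg. apply IH; auto.
  - refine (RC _ _ (S_boxR _ _ dR) (PH_boxR _ _ dR _) _ _ dC H eq_refl); apply Hsm; simpl; lia.
  - apply S_diamL. rewrite <- Hg. apply IH; auto.
  - refine (RC _ _ (S_diamR _ _ dR) (PH_diamR _ _ dR _) _ _ dC H eq_refl); apply Hsm; simpl; lia.
  - apply S_bangL. rewrite <- Hg. apply IH; auto.
  - apply S_bangP. rewrite <- Hg. apply IH; auto.
  - refine (RC _ _ (S_bangR _ _ nz dR) (PH_bangR _ _ nz dR _) _ _ dC H eq_refl); apply Hsm; simpl; lia.
  - apply S_bangC; auto. rewrite <- Hg. apply IH; auto.
Qed.

Lemma cut_all : forall A, P_I A.
Proof.
  assert (forall n A, fsize A < n -> P_I A).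
  { induction n; intros A Hlt; [lia|]. intros X dX. apply (cut_gen X A dX). intros B HB. apply IHn. lia. }
  intros A. apply (H (S (fsize A))). lia.
Qed.

Fixpoint fS (t : ftt) : stt :=
  match t with FF A => SF A | FB L => SB zero (map fS L) end.

Fixpoint fK (K : fctx) : sctx :=
  match K with FHole => SHole | FIn G1 K' G2 => SIn zero (map fS G1) (fK K') (map fS G2) end.

Lemma fS_fill K L : (zero, map fS (ffill K L)) = sfill (fK K) (zero, map fS L).
Proof.
  induction K as [|G1 K IH G2]; simpl; auto. rewrite map_app. simpl. rewrite <- IH. reflexivity.
Qed.

Definition FS K D1 D2 := Fr (fK K) zero (map fS D1) (map fS D2).

Lemma fS_frame K D1 Y D2 : (zero, map fS (ffill K (D1 ++ Y ++ D2))) = ffr (FS K D1 D2) (zero, map fS Y).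
Proof. rewrite fS_fill. simpl. rewrite !map_app, add_zero_r. reflexivity. Qed.

Ltac eqt := unfold ffr, sbr; simpl; rewrite ?map_app; simpl; rewrite ?map_app, ?add_zero_l, ?add_zero_r; unfold sbr; simpl;
  first [reflexivity | (f_equal; apply pair_eq; [try stoup_eq | try leq]) | (apply pair_eq; [try stoup_eq| try leq])].

Lemma sing_nz A : sing A <> zero.
Proof. intro E. apply (f_equal (fun g => g A)) in E. unfold sing, zero in E. destruct formula_eq_dec; congruence. Qed.

Lemma S_singA A : S0 (sing A, []) A.
Proof.
  apply S0_eq with (ffr (Fr SHole zero [] []) (sing A, [])).
  - apply S_bangP. eapply S0_eq. apply S_ax. eqt.
  - eqt.
Qed.

Lemma bang_to_stoup f A C : S0 (ffr f (zero, [SF (Bang A)])) C -> S0 (ffr f (sing A, [])) C.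
Proof.
  intros d. apply (cut_all (Bang A) (sing A, [])). apply S_bangR. apply sing_nz. apply S_singA. exact d.
Qed.

Definition sings (As : list formula) : sst := fold_right (fun A z => add (sing A) z) zero As.

Lemma sings_nz As : As <> [] -> sings As <> zero.
Proof.
  destruct As as [|A As]; [congruence|]. intros _ E. simpl in E.
  apply (f_equal (fun g => g A)) in E. unfold add, sing, zero in E. destruct formula_eq_dec; [lia|congruence].
Qed.

Lemma map_fbangs As : map fS (fbangs As) = map (fun A => SF (Bang A)) As.
Proof. unfold fbangs. rewrite map_map. reflexivity. Qed.

Lemma bangs_to_stoup As : forall f C, S0 (ffr f (zero, map fS (fbangs As))) C -> S0 (ffr f (sings As, [])) C.
Proof.
  rewrite map_fbangs. induction As as [|A As IH]; intros [K z D1 D2] C d; simpl in *.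
  - exact d.
  - assert (d1 : S0 (ffr (Fr K z D1 (map (fun A => SF (Bang A)) As ++ D2)) (sing A, [])) C).
    { apply bang_to_stoup. eapply S0_eq; [exact d|]. eqt. }
    assert (d2 : S0 (ffr (Fr K (add z (sing A)) D1 D2) (sings As, [])) C).
    { apply IH. eapply S0_eq; [exact d1|]. eqt. }
    eapply S0_eq; [exact d2|]. eqt.
Qed.

Lemma stoup_to_bangs As : forall f C, S0 (ffr f (sings As, [])) C -> S0 (ffr f (zero, map fS (fbangs As))) C.
Proof.
  rewrite map_fbangs. induction As as [|A As IH]; intros [K z D1 D2] C d; simpl in *.
  - exact d.
  - assert (d1 : S0 (ffr (Fr K (add z (sing A)) D1 D2) (zero, map (fun A => SF (Bang A)) As)) C).
    { apply IH. eapply S0_eq; [exact d|]. eqt. }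
    assert (d2 : S0 (ffr (Fr K z D1 (map (fun A => SF (Bang A)) As ++ D2)) (zero, [SF (Bang A)])) C).
    { apply S_bangL. eapply S0_eq; [exact d1|]. eqt. }
    eapply S0_eq; [exact d2|]. eqt.
Qed.

Ltac fr IH Y := eapply S0_eq; [exact IH | exact (fS_frame _ _ Y _)].

Lemma F_to_S c X C : F_der c X C -> S0 (zero, map fS X) C.
Proof.
  induction 1 as [A|
    |K G B D1 C D2 D d1 IH1 d2 IH2
    |G B C d IH
    |K G A D1 C D2 D d1 IH1 d2 IH2
    |G A C d IH
    |K D1 A B D2 D d IH
    |De G A B d1 IH1 d2 IH2
    |K D1 D2 A d IH
    |K D1 A1 A2 D2 C d1 IH1 d2 IH2
    |X A1 A2 d IH
    |X A1 A2 d IH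
    |K D1 A1 A2 D2 C d IH
    |K D1 A1 A2 D2 C d IH
    |X A1 A2 d1 IH1 d2 IH2
    |K D1 A D2 B d IH
    |X A d IH
    |K D1 A D2 B d IH
    |X A d IH
    |K D1 A D2 C d IH
    |K D1 A Phi D2 C d IH
    |K D1 A Phi D2 C d IH
    |As B nz d IH
    |K As G1 G2 G3 C nz d IH
    |K Pi A G1 G2 C _ d1 IH1 d2 IH2].
  - apply S_ax.
  - apply S_oneR.
  - change (D1 ++ FF (Over C B) :: G ++ D2) with (D1 ++ (FF (Over C B) :: G) ++ D2).
    rewrite fS_frame. apply S_overL; auto. fr IH2 [FF C].
  - apply S_overR. rewrite map_app in IH. exact IH.
  - replace (D1 ++ G ++ FF (Under A C) :: D2) with (D1 ++ (G ++ [FF (Under A C)]) ++ D2) by leq.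
    rewrite fS_frame. rewrite map_app. apply S_underL; auto. fr IH2 [FF C].
  - apply S_underR. exact IH.
  - change (D1 ++ FF (Prod A B) :: D2) with (D1 ++ [FF (Prod A B)] ++ D2).
    rewrite fS_frame. apply S_prodL. fr IH [FF A; FF B].
  - eapply S0_eq. apply S_prodR; [exact IH1|exact IH2]. rewrite map_app, add_zero_r. reflexivity.
  - change (D1 ++ FF One :: D2) with (D1 ++ [FF One] ++ D2).
    rewrite fS_frame. apply S_oneL. fr IH (@nil ftt).
  - change (D1 ++ FF (Or A1 A2) :: D2) with (D1 ++ [FF (Or A1 A2)] ++ D2).
    rewrite fS_frame. apply S_orL; [fr IH1 [FF A1] | fr IH2 [FF A2]].
  - apply S_orR1; auto.
  - apply S_orR2; auto.
  - change (D1 ++ FF (And A1 A2) :: D2) with (D1 ++ [FF (And A1 A2)] ++ D2).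
    rewrite fS_frame. apply S_andL1. fr IH [FF A1].
  - change (D1 ++ FF (And A1 A2) :: D2) with (D1 ++ [FF (And A1 A2)] ++ D2).
    rewrite fS_frame. apply S_andL2. fr IH [FF A2].
  - apply S_andR; auto.
  - change (D1 ++ FB [FF (BoxI A)] :: D2) with (D1 ++ [FB [FF (BoxI A)]] ++ D2).
    rewrite fS_frame. apply S_boxL. fr IH [FF A].
  - apply S_boxR. exact IH.
  - change (D1 ++ FF (Diam A) :: D2) with (D1 ++ [FF (Diam A)] ++ D2).
    rewrite fS_frame. apply S_diamL. fr IH [FB [FF A]].
  - apply (S_diamR (zero, map fS X)). exact IH.
  - change (D1 ++ FF (Bang A) :: D2) with (D1 ++ [FF (Bang A)] ++ D2).
    rewrite fS_frame. apply S_bangL. apply S_bangP. fr IH [FF A].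
  -
    change (D1 ++ Phi ++ FF (Bang A) :: D2) with (D1 ++ Phi ++ [FF (Bang A)] ++ D2).
    rewrite app_assoc, fS_frame. apply S_bangL.
    change (D1 ++ FF (Bang A) :: Phi ++ D2) with (D1 ++ [FF (Bang A)] ++ Phi ++ D2) in IH.
    rewrite fS_frame in IH. apply bang_to_stoup in IH. eapply S0_eq; [exact IH|]. eqt.
  -
    change (D1 ++ FF (Bang A) :: Phi ++ D2) with (D1 ++ [FF (Bang A)] ++ Phi ++ D2).
    rewrite fS_frame. apply S_bangL.
    change (D1 ++ Phi ++ FF (Bang A) :: D2) with (D1 ++ Phi ++ [FF (Bang A)] ++ D2) in IH.
    rewrite app_assoc, fS_frame in IH. apply bang_to_stoup in IH. eapply S0_eq; [exact IH|]. eqt.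
  -
    assert (d1 : S0 (ffr (Fr SHole zero [] []) (sings As, [])) B).
    { apply bangs_to_stoup. eapply S0_eq; [exact IH|]. eqt. }
    assert (d2 : S0 (sings As, []) (Bang B)).
    { apply S_bangR. apply sings_nz; auto. eapply S0_eq; [exact d1|]. eqt. }
    assert (d3 : S0 (ffr (Fr SHole zero [] []) (zero, map fS (fbangs As))) (Bang B)).
    { apply stoup_to_bangs. eapply S0_eq; [exact d2|]. eqt. }
    eapply S0_eq; [exact d3|]. eqt.
  -
    rewrite <- (app_nil_l (fbangs As ++ _)) in IH. rewrite fS_frame in IH.
    apply bangs_to_stoup in IH.
    destruct (kapp_ex (fK K) (SIn (sings As) (map fS G1) SHole (map fS G3))) as [K' HK].
    assert (d1 : S0 (ffr (Fr K' zero [] (map fS G2)) (zero, map fS (fbangs As))) C).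
    { eapply S0_eq; [exact IH|]. unfold ffr. rewrite HK. eqt. }
    apply bangs_to_stoup in d1.
    assert (d2 : S0 (ffr (Fr (fK K) zero (map fS G1) (map fS G3)) (add (sings As) zero, map fS G2)) C).
    { apply S_bangC. apply sings_nz; auto. eapply S0_eq; [exact d1|]. unfold ffr. rewrite HK. eqt. }
    rewrite <- (app_nil_l (fbangs As ++ _)). rewrite fS_frame.
    apply stoup_to_bangs. eapply S0_eq; [exact d2|]. eqt.
  -
    rewrite fS_frame. apply (cut_all A _ IH1). fr IH2 [FF A].
Qed.

Definition cnt (z : stoup) : sst := fun B => count_occ formula_eq_dec z B.

Lemma cnt_app l1 l2 : cnt (l1 ++ l2) = add (cnt l1) (cnt l2).
Proof. apply functional_extensionality; intro x. unfold cnt, add. apply count_occ_app. Qed.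
Lemma cnt_nil : cnt [] = zero. Proof. reflexivity. Qed.
Lemma cnt_one A : cnt [A] = sing A. Proof. reflexivity. Qed.
Lemma cnt_perm l l' : Permutation l l' -> cnt l = cnt l'.
Proof. intros H. apply functional_extensionality; intro x. unfold cnt. apply Permutation_count_occ. auto. Qed.
Lemma cnt_nz l : l <> [] -> cnt l <> zero.
Proof.
  destruct l as [|A l]; [congruence|]. intros _ E. apply (f_equal (fun g => g A)) in E.
  unfold cnt, zero in E. simpl in E. destruct formula_eq_dec; congruence.
Qed.

Fixpoint mS (t : mtt) : stt :=
  match t with MF A => SF A | MB z G => SB (cnt z) (map mS G) end.
Definition mM (X : mf) : smf := (cnt (fst X), map mS (snd X)).
Fixpoint mK (K : mctx) : sctx :=
  match K with MHole => SHole | MIn z G1 K' G2 => SIn (cnt z) (map mS G1) (mK K') (map mS G2) end.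

Lemma mM_fill K X : mM (mfill K X) = sfill (mK K) (mM X).
Proof.
  induction K as [|z G1 K IH G2]; simpl; auto. unfold mM at 1; simpl. rewrite map_app. simpl.
  unfold mbr. rewrite <- IH. reflexivity.
Qed.

Fixpoint mtt_eq_mS t t' (H : mtt_eq t t') {struct H} : mS t = mS t' :=
  match H in mtt_eq t t' return mS t = mS t' with
  | mtt_eqF A => eq_refl
  | mtt_eqB z z' G G' Hp HF =>
      f_equal2 SB (cnt_perm z z' Hp)
        ((fix go G G' (HF : Forall2 mtt_eq G G') {struct HF} : map mS G = map mS G' :=
            match HF in Forall2 _ G G' return map mS G = map mS G' with
            | @Forall2_nil _ _ _ => eq_refl
            | @Forall2_cons _ _ _ x y l l' Hxy Hll => f_equal2 cons (mtt_eq_mS x y Hxy) (go l l' Hll)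
            end) G G' HF)
  end.

Lemma mf_eq_mM X X' : mf_eq X X' -> mM X = mM X'.
Proof.
  intros [Hp HF]. unfold mM. rewrite (cnt_perm _ _ Hp). f_equal.
  induction HF; simpl; auto. rewrite (mtt_eq_mS _ _ H), IHHF. auto.
Qed.

Ltac meq := rewrite ?mM_fill; unfold ffr, mM, mbr, mbr1, sbr; simpl; rewrite ?map_app, ?cnt_app; simpl;
  rewrite ?map_app, ?cnt_app; unfold cnt; simpl;
  first [reflexivity | (f_equal; apply pair_eq; [try stoup_eq | try leq]) | (apply pair_eq; [try stoup_eq | try leq])].

Lemma M_to_S c X C : M_der c X C -> S0 (mM X) C.
Proof.
  induction 1 as [X X' C d IH Heq
    |A|
    |K z1 G B z2 D1 C D2 D d1 IH1 d2 IH2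
    |z G B C d IH
    |K z1 G A z2 D1 C D2 D d1 IH1 d2 IH2
    |z G A C d IH
    |K z D1 A B D2 D d IH
    |z1 De z2 G A B d1 IH1 d2 IH2
    |K z D1 D2 A d IH
    |K z D1 A1 A2 D2 C d1 IH1 d2 IH2
    |X A1 A2 d IH
    |X A1 A2 d IH
    |K z D1 A1 A2 D2 C d IH
    |K z D1 A1 A2 D2 C d IH
    |X A1 A2 d1 IH1 d2 IH2
    |K z D1 A D2 B d IH
    |X A d IH
    |K z D1 A D2 B d IH
    |X A d IH
    |K z A G1 G2 B d IH
    |K z G1 A G2 B d IH
    |z B nz d IH
    |K z1 z2 z' G1 G2 G3 C nz d IH
    |K xi Pi A z G1 G2 C _ d1 IH1 d2 IH2].
  - rewrite <- (mf_eq_mM _ _ Heq). exact IH.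
  - eapply S0_eq. apply S_ax. meq.
  - eapply S0_eq. apply S_oneR. meq.
  - eapply S0_eq. apply S_overL with (f := Fr (mK K) (cnt z2) (map mS D1) (map mS D2)).
    + exact IH1.
    + eapply S0_eq; [exact IH2|]. meq.
    + meq.
  - apply S_overR. eapply S0_eq; [exact IH|]. meq.
  - eapply S0_eq. apply S_underL with (f := Fr (mK K) (cnt z2) (map mS D1) (map mS D2)).
    + exact IH1.
    + eapply S0_eq; [exact IH2|]. meq.
    + meq.
  - apply S_underR. eapply S0_eq; [exact IH|]. meq.
  - eapply S0_eq. apply S_prodL with (f := Fr (mK K) (cnt z) (map mS D1) (map mS D2)).
    + eapply S0_eq; [exact IH|]. meq.
    + meq.
  - eapply S0_eq. apply S_prodR; [exact IH1|exact IH2]. meq.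
  - eapply S0_eq. apply S_oneL with (f := Fr (mK K) (cnt z) (map mS D1) (map mS D2)).
    + eapply S0_eq; [exact IH|]. meq.
    + meq.
  - eapply S0_eq. apply S_orL with (f := Fr (mK K) (cnt z) (map mS D1) (map mS D2)).
    + eapply S0_eq; [exact IH1|]. meq.
    + eapply S0_eq; [exact IH2|]. meq.
    + meq.
  - apply S_orR1; auto.
  - apply S_orR2; auto.
  - eapply S0_eq. apply S_andL1 with (f := Fr (mK K) (cnt z) (map mS D1) (map mS D2)).
    + eapply S0_eq; [exact IH|]. meq.
    + meq.
  - eapply S0_eq. apply S_andL2 with (f := Fr (mK K) (cnt z) (map mS D1) (map mS D2)).
    + eapply S0_eq; [exact IH|]. meq.
    + meq.
  - apply S_andR; auto.
  - eapply S0_eq. apply S_boxL with (f := Fr (mK K) (cnt z) (map mS D1) (map mS D2)).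
    + eapply S0_eq; [exact IH|]. meq.
    + meq.
  - apply S_boxR. eapply S0_eq; [exact IH|]. meq.
  - eapply S0_eq. apply S_diamL with (f := Fr (mK K) (cnt z) (map mS D1) (map mS D2)).
    + eapply S0_eq; [exact IH|]. meq.
    + meq.
  - eapply S0_eq. apply (S_diamR (mM X)). exact IH. meq.
  - eapply S0_eq. apply S_bangL with (f := Fr (mK K) (cnt z) (map mS G1) (map mS G2)).
    + eapply S0_eq; [exact IH|]. meq.
    + meq.
  - eapply S0_eq. apply S_bangP with (f := Fr (mK K) (cnt z) (map mS G1) (map mS G2)).
    + eapply S0_eq; [exact IH|]. meq.
    + meq.
  - apply S_bangR. apply cnt_nz; auto. exact IH.
  - eapply S0_eq. apply S_bangC with (f := Fr (mK K) (cnt z1) (map mS G1) (map mS G3)) (z2 := cnt z2) (z' := cnt z').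
    + apply cnt_nz; auto.
    + eapply S0_eq; [exact IH|]. meq.
    + meq.
  - eapply S0_eq. apply (cut_all A _ IH1 (Fr (mK K) (cnt z) (map mS G1) (map mS G2))).
    + eapply S0_eq; [exact IH2|]. meq.
    + meq.
Qed.

Lemma cnt_perm_inv l l' : cnt l = cnt l' -> Permutation l l'.
Proof.
  intros E. apply (Permutation_count_occ formula_eq_dec). intro x.
  apply (f_equal (fun g => g x)) in E. exact E.
Qed.

Lemma cnt_zero_inv l : cnt l = zero -> l = [].
Proof. destruct l; auto. intros E. exfalso. apply (cnt_nz (f :: l)); auto. discriminate. Qed.

Lemma cnt_split : forall l z a, cnt l = add z a ->
  exists lz la, Permutation l (lz ++ la) /\ cnt lz = z /\ cnt la = a.
Proof.
  induction l as [|B l IH]; intros z a E.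
  - exists [], []. split; auto.
    assert (forall x, 0 = z x + a x) by (intro x; apply (f_equal (fun g => g x)) in E; exact E).
    split; apply functional_extensionality; intro x; unfold cnt, zero; simpl; specialize (H x); lia.
  - assert (Ex : forall x, cnt (B :: l) x = z x + a x) by (intro x; apply (f_equal (fun g => g x)) in E; exact E).
    assert (EB := Ex B). unfold cnt in EB; simpl in EB. destruct (formula_eq_dec B B) as [_|n]; [|congruence].
    destruct (z B) eqn:HzB.
    +
      destruct (IH z (fun x => a x - sing B x)) as [lz [la [Hp [Hz Ha]]]].
      { apply functional_extensionality; intro x. specialize (Ex x). unfold cnt, add, sing in *; simpl in *.
        destruct (formula_eq_dec B x); subst; lia. }
      exists lz, (B :: la). split; [|split; auto].
      * eapply perm_trans. apply perm_skip, Hp. apply Permutation_middle.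
      * apply functional_extensionality; intro x. specialize (Ex x).
        apply (f_equal (fun g => g x)) in Ha. unfold cnt, add, sing in *; simpl in *.
        destruct (formula_eq_dec B x); subst; lia.
    + destruct (IH (fun x => z x - sing B x) a) as [lz [la [Hp [Hz Ha]]]].
      { apply functional_extensionality; intro x. specialize (Ex x). unfold cnt, add, sing in *; simpl in *.
        destruct (formula_eq_dec B x); subst; lia. }
      exists (B :: lz), la. split; [|split; auto].
      * simpl. apply perm_skip, Hp.
      * apply functional_extensionality; intro x. specialize (Ex x).
        apply (f_equal (fun g => g x)) in Hz. unfold cnt, add, sing in *; simpl in *.
        destruct (formula_eq_dec B x); subst; lia.
Qed.

Lemma mS_F_inv t A : mS t = SF A -> t = MF A.
Proof. destruct t; simpl; intro H; inversion H; auto. Qed.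

Lemma mS_B_inv t s L : mS t = SB s L -> exists z G, t = MB z G /\ cnt z = s /\ map mS G = L.
Proof. destruct t; simpl; intro H; inversion H; eauto. Qed.

Lemma mM_fill_inv : forall K X s L, mM X = sfill K (s, L) ->
  exists KM zM LM, X = mfill KM (zM, LM) /\ mK KM = K /\ cnt zM = s /\ map mS LM = L.
Proof.
  induction K as [|s' E1 K IH E2]; intros [z0 L0] s L E; unfold mM in E; simpl in E; injection E as E1' E2'.
  - exists MHole, z0, L0. auto.
  - apply map_eq_app in E2' as [E1M [R [-> [HE1 HR]]]].
    apply map_eq_cons in HR as [t [E2M [-> [Ht HE2]]]].
    unfold sbr in Ht. apply mS_B_inv in Ht as [zt [Lt [-> [Hzt HLt]]]].
    destruct (IH (zt, Lt) s L) as [KM [zM [LM [HX [HK [Hz HL]]]]]].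
    { unfold mM; simpl. rewrite Hzt, HLt. symmetry. apply surj. }
    exists (MIn z0 E1M KM E2M), zM, LM. simpl. rewrite <- HX. repeat split; auto.
    simpl. rewrite HK, E1', HE1, HE2. auto.
Qed.

Lemma mM_ffr_inv K z D1 D2 a Y X : mM X = ffr (Fr K z D1 D2) (a, Y) ->
  exists KM zM D1M YM D2M lz la, X = mfill KM (zM, D1M ++ YM ++ D2M) /\ mK KM = K /\
    Permutation zM (lz ++ la) /\ cnt lz = z /\ cnt la = a /\
    map mS D1M = D1 /\ map mS YM = Y /\ map mS D2M = D2.
Proof.
  intros E. simpl in E. apply mM_fill_inv in E as [KM [zM [LM [-> [HK [Hz HL]]]]]].
  apply map_eq_app in HL as [D1M [R [-> [HD1 HR]]]].
  apply map_eq_app in HR as [YM [D2M [-> [HY HD2]]]].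
  destruct (cnt_split _ _ _ Hz) as [lz [la [Hp [Hlz Hla]]]].
  exists KM, zM, D1M, YM, D2M, lz, la. repeat split; auto.
Qed.

Lemma mM_frame_eq KM l lz b D1M WM D2M : cnt l = add (cnt lz) b ->
  mM (mfill KM (l, D1M ++ WM ++ D2M)) = ffr (Fr (mK KM) (cnt lz) (map mS D1M) (map mS D2M)) (b, map mS WM).
Proof. intros E. rewrite mM_fill. unfold mM; simpl. rewrite !map_app, E. reflexivity. Qed.

Fixpoint mtt_eq_refl (t : mtt) : mtt_eq t t :=
  match t with
  | MF A => mtt_eqF A
  | MB z G => mtt_eqB z z G G (Permutation_refl z)
      ((fix go (G : list mtt) : Forall2 mtt_eq G G :=
          match G with [] => Forall2_nil _ | t :: G => Forall2_cons t t (mtt_eq_refl t) (go G) end) G)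
  end.

Lemma Forall2_refl_m G : Forall2 mtt_eq G G.
Proof. induction G; constructor; auto. apply mtt_eq_refl. Qed.

Lemma mf_eq_perm_fill : forall K z z' L, Permutation z z' -> mf_eq (mfill K (z, L)) (mfill K (z', L)).
Proof.
  induction K as [|s E1 K IH E2]; intros z z' L Hp; simpl.
  - split; simpl; auto. apply Forall2_refl_m.
  - split; simpl; auto. apply Forall2_app. apply Forall2_refl_m. constructor. 2: apply Forall2_refl_m.
    destruct (IH z z' L Hp) as [H1 H2]. unfold mbr. constructor; auto.
Qed.

Lemma M_perm K z z' L C : M_der false (mfill K (z, L)) C -> Permutation z z' -> M_der false (mfill K (z', L)) C.
Proof. intros d Hp. eapply M_mset; [exact d|]. apply mf_eq_perm_fill; auto. Qed.

Lemma M_eq X Y C : M_der false X C -> X = Y -> M_der false Y C.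
Proof. intros; subst; auto. Qed.

Lemma map_single_F L A : map mS L = [SF A] -> L = [MF A].
Proof.
  intros H. apply map_eq_cons in H as [t [L' [-> [Ht HL]]]]. apply mS_F_inv in Ht. apply map_eq_nil in HL. subst; auto.
Qed.

Ltac inv_fr E := let KM := fresh "KM" in let zM := fresh "zM" in let D1M := fresh "D1M" in
  let YM := fresh "YM" in let D2M := fresh "D2M" in let lz := fresh "lz" in let la := fresh "la" in
  apply mM_ffr_inv in E as (KM & zM & D1M & YM & D2M & lz & la & -> & HK & Hp & Hlz & Hla & HD1 & HY & HD2);
  subst.

Ltac prem IH l b W := apply IH; refine (mM_frame_eq _ l _ b _ W _ _);
  rewrite ?cnt_app, ?cnt_one, ?cnt_nil; try stoup_eq; auto.

Lemma S_to_M : forall T C, S0 T C -> forall X, mM X = T -> M_der false X C.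
Proof.
  intros T D0 dR.
  induction dR as [A0|
    |[K z D1 D2] z1 G B C D dR1 IH1 dR2 IH2
    |z G B C dR IH
    |[K z D1 D2] z1 G A' C D dR1 IH1 dR2 IH2
    |z G A' C dR IH
    |[K z D1 D2] A1 A2 D dR IH
    |z1 De z2 G A1 A2 dR1 IH1 dR2 IH2
    |[K z D1 D2] D dR IH
    |[K z D1 D2] A1 A2 D dR1 IH1 dR2 IH2
    |Y A1 A2 dR IH
    |Y A1 A2 dR IH
    |[K z D1 D2] A1 A2 D dR IH
    |[K z D1 D2] A1 A2 D dR IH
    |Y A1 A2 dR1 IH1 dR2 IH2
    |[K z D1 D2] A' D dR IH
    |Y A' dR IH
    |[K z D1 D2] A' D dR IH
    |Y A' dR IH
    |[K z D1 D2] A' D dR IH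
    |[K z D1 D2] A' D dR IH
    |z B nz dR IH
    |[K z D1 D2] z2 z' G2 D nz dR IH]; intros X E.
  -
    destruct X as [zM LM]. unfold mM in E; simpl in E. injection E as Hz HL.
    apply cnt_zero_inv in Hz. apply map_single_F in HL. subst. apply M_ax.
  - destruct X as [zM LM]. unfold mM in E; simpl in E. injection E as Hz HL.
    apply cnt_zero_inv in Hz. apply map_eq_nil in HL. subst. apply M_oneR.
  -
    inv_fr E. apply map_eq_cons in HY as [t [GM [-> [Ht HG]]]]. apply mS_F_inv in Ht. subst.
    apply M_perm with (z := la ++ lz).
    + apply (M_overL false KM la GM B lz D1M C D2M D).
      * apply IH1. reflexivity.
      * prem IH2 lz zero [MF C].
    + apply Permutation_sym. eapply perm_trans; [exact Hp|]. apply Permutation_app_comm.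
  -
    destruct X as [zM LM]. unfold mM in E; simpl in E. injection E as Hz HL. subst.
    apply M_overR. apply IH. unfold mM; simpl. rewrite map_app. reflexivity.
  -
    inv_fr E. apply map_eq_app in HY as [GM [R [-> [HG HR]]]]. apply map_single_F in HR. subst.
    apply M_perm with (z := la ++ lz).
    + eapply M_eq. apply (M_underL false KM la GM A' lz D1M C D2M D).
      * apply IH1. reflexivity.
      * prem IH2 lz zero [MF C].
      * f_equal. f_equal. leq.
    + apply Permutation_sym. eapply perm_trans; [exact Hp|]. apply Permutation_app_comm.
  -
    destruct X as [zM LM]. unfold mM in E; simpl in E. injection E as Hz HL. subst.
    apply M_underR. apply IH. reflexivity.
  -
    inv_fr E. apply cnt_zero_inv in Hla. apply map_single_F in HY. subst. rewrite app_nil_r in Hp.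
    apply M_perm with (z := lz); [|apply Permutation_sym; exact Hp].
    apply (M_prodL false KM lz D1M A1 A2 D2M D). prem IH lz zero [MF A1; MF A2].
  -
    destruct X as [zM LM]. unfold mM in E; simpl in E. injection E as Hz HL.
    apply map_eq_app in HL as [DeM [GM [-> [HDe HG]]]].
    destruct (cnt_split _ _ _ Hz) as [l1 [l2 [Hp [H1 H2]]]]. subst.
    apply (M_perm MHole (l1 ++ l2)); [|apply Permutation_sym; exact Hp].
    apply M_prodR; [apply IH1|apply IH2]; reflexivity.
  -
    inv_fr E. apply cnt_zero_inv in Hla. apply map_single_F in HY. subst. rewrite app_nil_r in Hp.
    apply M_perm with (z := lz); [|apply Permutation_sym; exact Hp].
    apply (M_oneL false KM lz D1M D2M D). prem IH lz zero (@nil mtt).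
  -
    inv_fr E. apply cnt_zero_inv in Hla. apply map_single_F in HY. subst. rewrite app_nil_r in Hp.
    apply M_perm with (z := lz); [|apply Permutation_sym; exact Hp].
    apply (M_orL false KM lz D1M A1 A2 D2M D); [prem IH1 lz zero [MF A1]|prem IH2 lz zero [MF A2]].
  - apply M_orR1; auto.
  - apply M_orR2; auto.
  - inv_fr E. apply cnt_zero_inv in Hla. apply map_single_F in HY. subst. rewrite app_nil_r in Hp.
    apply M_perm with (z := lz); [|apply Permutation_sym; exact Hp].
    apply (M_andL1 false KM lz D1M A1 A2 D2M D). prem IH lz zero [MF A1].
  - inv_fr E. apply cnt_zero_inv in Hla. apply map_single_F in HY. subst. rewrite app_nil_r in Hp.
    apply M_perm with (z := lz); [|apply Permutation_sym; exact Hp].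
    apply (M_andL2 false KM lz D1M A1 A2 D2M D). prem IH lz zero [MF A2].
  - apply M_andR; auto.
  -
    inv_fr E. apply cnt_zero_inv in Hla. subst. rewrite app_nil_r in Hp.
    apply map_eq_cons in HY as [t [R [-> [Ht HR]]]]. apply map_eq_nil in HR. subst.
    apply mS_B_inv in Ht as [zb [Gb [-> [Hzb HGb]]]]. apply cnt_zero_inv in Hzb. apply map_single_F in HGb. subst.
    apply M_perm with (z := lz); [|apply Permutation_sym; exact Hp].
    apply (M_boxL false KM lz D1M A' D2M D). prem IH lz zero [MF A'].
  -
    apply M_boxR. apply IH. subst Y. reflexivity.
  -
    inv_fr E. apply cnt_zero_inv in Hla. apply map_single_F in HY. subst. rewrite app_nil_r in Hp.
    apply M_perm with (z := lz); [|apply Permutation_sym; exact Hp].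
    apply (M_diamL false KM lz D1M A' D2M D). prem IH lz zero [mbr1 A'].
  -
    destruct X as [zM LM]. unfold mM in E; simpl in E. injection E as Hz HL.
    apply cnt_zero_inv in Hz. apply map_eq_cons in HL as [t [R [-> [Ht HR]]]]. apply map_eq_nil in HR.
    unfold sbr in Ht. apply mS_B_inv in Ht as [zt [Gt [-> [Hzt HGt]]]]. subst.
    apply (M_diamR false (zt, Gt)). apply IH. unfold mM; simpl. rewrite Hzt, HGt. symmetry. apply surj.
  -
    inv_fr E. apply cnt_zero_inv in Hla. apply map_single_F in HY. subst. rewrite app_nil_r in Hp.
    apply M_perm with (z := lz); [|apply Permutation_sym; exact Hp].
    apply (M_bangL false KM lz A' D1M D2M D). prem IH (lz ++ [A']) (sing A') (@nil mtt).
  -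
    inv_fr E. apply map_eq_nil in HY. subst.
    assert (Hla' : Permutation la [A']) by (apply cnt_perm_inv; rewrite Hla; reflexivity).
    apply M_perm with (z := lz ++ [A']).
    + apply (M_bangP false KM lz D1M A' D2M D). prem IH lz zero [MF A'].
    + apply Permutation_sym. eapply perm_trans; [exact Hp|]. apply Permutation_app_head. exact Hla'.
  -
    destruct X as [zM LM]. unfold mM in E; simpl in E. injection E as Hz HL. apply map_eq_nil in HL. subst.
    apply M_bangR.
    + intros ->. apply nz. reflexivity.
    + apply IH. reflexivity.
  -
    inv_fr E. destruct (cnt_split _ _ _ Hla) as [l2 [l' [Hp' [H2 H']]]]. subst.
    apply M_perm with (z := lz ++ l2 ++ l').
    + apply (M_bangC false KM lz l2 l' D1M YM D2M D).
      * intros ->. apply nz. reflexivity.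
      * apply IH. etransitivity.
        -- refine (mM_frame_eq KM (lz ++ l2) lz (cnt l2) D1M [MB (l' ++ l2) YM] D2M _). apply cnt_app.
        -- simpl. rewrite cnt_app. reflexivity.
    + apply Permutation_sym. eapply perm_trans; [exact Hp|]. apply Permutation_app_head. exact Hp'.
Qed.

Fixpoint trT (t : mtt) : ftt :=
  match t with MF A => FF A | MB z G => FB (fbangs z ++ map trT G) end.
Definition trM (X : mf) : list ftt := fbangs (fst X) ++ map trT (snd X).
Fixpoint trK (K : mctx) : fctx :=
  match K with MHole => FHole | MIn z G1 K' G2 => FIn (fbangs z ++ map trT G1) (trK K') (map trT G2) end.

Lemma trM_fill K X : trM (mfill K X) = ffill (trK K) (trM X).
Proof.
  induction K as [|z G1 K IH G2]; simpl; auto. unfold trM at 1; simpl. rewrite map_app. simpl.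
  unfold mbr. rewrite <- IH. unfold trM. rewrite app_assoc. reflexivity.
Qed.

Lemma fbangs_app l1 l2 : fbangs (l1 ++ l2) = fbangs l1 ++ fbangs l2.
Proof. unfold fbangs. apply map_app. Qed.

Lemma F_eq X Y C : F_der false X C -> X = Y -> F_der false Y C.
Proof. intros; subst; auto. Qed.

Ltac fe := rewrite ?fbangs_app, ?map_app; simpl; rewrite ?fbangs_app, ?map_app;
  first [reflexivity | (f_equal; leq) | leq].

Lemma F_mv_r K Phi l : forall D1 D2 C, F_der false (ffill K (D1 ++ fbangs l ++ Phi ++ D2)) C ->
  F_der false (ffill K (D1 ++ Phi ++ fbangs l ++ D2)) C.
Proof.
  induction l as [|A l IH]; intros D1 D2 C d; simpl in *; auto.
  assert (d1 : F_der false (ffill K ((D1 ++ [FF (Bang A)]) ++ Phi ++ fbangs l ++ D2)) C).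
  { apply IH. eapply F_eq; [exact d|]. fe. }
  eapply F_eq. apply (F_bangP1 false K D1 A Phi (fbangs l ++ D2)). eapply F_eq; [exact d1|]. fe. fe.
Qed.

Lemma F_mv_l K Phi l : forall D1 D2 C, F_der false (ffill K (D1 ++ Phi ++ fbangs l ++ D2)) C ->
  F_der false (ffill K (D1 ++ fbangs l ++ Phi ++ D2)) C.
Proof.
  induction l as [|A l IH]; intros D1 D2 C d; simpl in *; auto.
  assert (d1 := F_bangP2 false K D1 A Phi (fbangs l ++ D2) C d).
  eapply F_eq. apply (IH (D1 ++ [FF (Bang A)]) D2 C). eapply F_eq; [exact d1|]. fe. fe.
Qed.

Lemma F_perm K l l' : Permutation l l' -> forall D1 D2 C, F_der false (ffill K (D1 ++ fbangs l ++ D2)) C ->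
  F_der false (ffill K (D1 ++ fbangs l' ++ D2)) C.
Proof.
  induction 1 as [|x l l' Hp IH|x y l|l l' l'' H1 IH1 H2 IH2]; intros D1 D2 C d; simpl in *; auto.
  - eapply F_eq. apply (IH (D1 ++ [FF (Bang x)]) D2). eapply F_eq; [exact d|]. fe. fe.
  - eapply F_eq. apply (F_bangP1 false K D1 y [FF (Bang x)] (fbangs l ++ D2)). eapply F_eq; [exact d|]. fe. fe.
Qed.

Fixpoint fkapp (K1 K2 : fctx) : fctx :=
  match K1 with FHole => K2 | FIn G1 K G2 => FIn G1 (fkapp K K2) G2 end.
Lemma ffill_kapp K1 K2 L : ffill (fkapp K1 K2) L = ffill K1 (ffill K2 L).
Proof. induction K1; simpl; auto. rewrite IHK1; auto. Qed.

Lemma mtt_eq_ind' (P : mtt -> mtt -> Prop) (hF : forall A, P (MF A) (MF A))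
  (hB : forall z z' G G', Permutation z z' -> Forall2 mtt_eq G G' -> Forall2 P G G' -> P (MB z G) (MB z' G')) :
  forall t t', mtt_eq t t' -> P t t'.
Proof.
  fix IH 3. intros t t' H. destruct H as [A|z z' G G' Hp HF].
  - apply hF.
  - apply hB; auto. clear Hp. revert G G' HF. fix IH2 3. intros G G' HF. destruct HF as [|x y l l' Hxy Hll].
    + constructor.
    + constructor. apply IH; exact Hxy. apply IH2; exact Hll.
Qed.

Definition Pt (t t' : mtt) := forall K D1 D2 C, F_der false (ffill K (D1 ++ trT t :: D2)) C ->
  F_der false (ffill K (D1 ++ trT t' :: D2)) C.

Lemma list_Pt G G' : Forall2 Pt G G' -> forall K D1 D2 C, F_der false (ffill K (D1 ++ map trT G ++ D2)) C ->
  F_der false (ffill K (D1 ++ map trT G' ++ D2)) C.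
Proof.
  induction 1 as [|x y l l' Hxy Hll IH]; intros K D1 D2 C d; simpl in *; auto.
  apply Hxy in d. eapply F_eq. apply (IH K (D1 ++ [trT y]) D2 C). eapply F_eq; [exact d|]. fe. fe.
Qed.

Lemma mtt_eq_Pt : forall t t', mtt_eq t t' -> Pt t t'.
Proof.
  apply mtt_eq_ind'.
  - intros A K D1 D2 C d; auto.
  - intros z z' G G' Hp _ HP K D1 D2 C d. simpl in *.
    replace (ffill K (D1 ++ FB (fbangs z' ++ map trT G') :: D2)) with
      (ffill (fkapp K (FIn D1 FHole D2)) ([] ++ fbangs z' ++ map trT G' ++ []))
      by (rewrite ffill_kapp; simpl; rewrite app_nil_r; reflexivity).
    apply list_Pt with (G := G); auto.
    apply (F_perm _ z z' Hp [] (map trT G ++ [])).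
    eapply F_eq; [exact d|]. rewrite ffill_kapp; simpl; rewrite app_nil_r; reflexivity.
Qed.

Lemma mf_eq_F X X' C : mf_eq X X' -> F_der false (trM X) C -> F_der false (trM X') C.
Proof.
  intros [Hp HF] d. unfold trM in *.
  assert (HP : Forall2 Pt (snd X) (snd X')) by (eapply Forall2_impl; [|exact HF]; apply mtt_eq_Pt).
  rewrite <- (app_nil_l (fbangs _ ++ _)). rewrite <- (app_nil_r (map trT (snd X'))).
  change (F_der false (ffill FHole ([] ++ fbangs (fst X') ++ map trT (snd X') ++ [])) C).
  apply list_Pt with (G := snd X); auto.
  apply (F_perm _ (fst X) (fst X') Hp [] (map trT (snd X) ++ [])). simpl. rewrite app_nil_r. exact d.
Qed.

Ltac fe2 := rewrite ?ffill_kapp, ?trM_fill; unfold trM, mbr, mbr1; simpl; rewrite ?fbangs_app, ?map_app; simpl;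
  rewrite ?fbangs_app, ?map_app; first [reflexivity | (f_equal; leq) | leq].
Ltac via t := eapply F_eq; [t | fe2].
Ltac fromIH IH := eapply F_eq; [exact IH | fe2].

Lemma M_to_F X C : M_der false X C -> F_der false (trM X) C.
Proof.
  induction 1 as [X X' C d IH Heq
    |A|
    |K z1 G B z2 D1 C D2 D d1 IH1 d2 IH2
    |z G B C d IH
    |K z1 G A z2 D1 C D2 D d1 IH1 d2 IH2
    |z G A C d IH
    |K z D1 A B D2 D d IH
    |z1 De z2 G A B d1 IH1 d2 IH2
    |K z D1 D2 A d IH
    |K z D1 A1 A2 D2 C d1 IH1 d2 IH2
    |X A1 A2 d IH
    |X A1 A2 d IH
    |K z D1 A1 A2 D2 C d IH
    |K z D1 A1 A2 D2 C d IH
    |X A1 A2 d1 IH1 d2 IH2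
    |K z D1 A D2 B d IH
    |X A d IH
    |K z D1 A D2 B d IH
    |X A d IH
    |K z A G1 G2 B d IH
    |K z G1 A G2 B d IH
    |z B nz d IH
    |K z1 z2 z' G1 G2 G3 C nz d IH
    |K xi Pi A z G1 G2 C Hc d1 IH1 d2 IH2].
  - eapply mf_eq_F; eauto.
  - apply F_ax.
  - apply F_oneR.
  - via ltac:(apply (F_perm (trK K) (z2 ++ z1) (z1 ++ z2) (Permutation_app_comm _ _) []
                   (map trT D1 ++ FF (Over C B) :: map trT G ++ map trT D2))).
    via ltac:(apply (F_mv_l (trK K) (map trT D1 ++ [FF (Over C B)]) z1 (fbangs z2) (map trT G ++ map trT D2))).
    via ltac:(apply (F_overL false (trK K) (fbangs z1 ++ map trT G) B (fbangs z2 ++ map trT D1) C (map trT D2) D)).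
    + exact IH1.
    + fromIH IH2.
  - apply F_overR. fromIH IH.
  - via ltac:(apply (F_perm (trK K) (z2 ++ z1) (z1 ++ z2) (Permutation_app_comm _ _) []
                   (map trT D1 ++ map trT G ++ FF (Under A C) :: map trT D2))).
    via ltac:(apply (F_mv_l (trK K) (map trT D1) z1 (fbangs z2) (map trT G ++ FF (Under A C) :: map trT D2))).
    via ltac:(apply (F_underL false (trK K) (fbangs z1 ++ map trT G) A (fbangs z2 ++ map trT D1) C (map trT D2) D)).
    + exact IH1.
    + fromIH IH2.
  - apply F_underR.
    via ltac:(apply (F_mv_r FHole [FF A] z [] (map trT G))). fromIH IH.
  - via ltac:(apply (F_prodL false (trK K) (fbangs z ++ map trT D1) A B (map trT D2) D)). fromIH IH.
  - via ltac:(apply (F_mv_l FHole (map trT De) z2 (fbangs z1) (map trT G))).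
    via ltac:(apply (F_prodR false (fbangs z1 ++ map trT De) (fbangs z2 ++ map trT G) A B IH1 IH2)).
  - via ltac:(apply (F_oneL false (trK K) (fbangs z ++ map trT D1) (map trT D2) A)). fromIH IH.
  - via ltac:(apply (F_orL false (trK K) (fbangs z ++ map trT D1) A1 A2 (map trT D2) C)); [fromIH IH1|fromIH IH2].
  - apply F_orR1; auto.
  - apply F_orR2; auto.
  - via ltac:(apply (F_andL1 false (trK K) (fbangs z ++ map trT D1) A1 A2 (map trT D2) C)). fromIH IH.
  - via ltac:(apply (F_andL2 false (trK K) (fbangs z ++ map trT D1) A1 A2 (map trT D2) C)). fromIH IH.
  - apply F_andR; auto.
  - via ltac:(apply (F_boxL false (trK K) (fbangs z ++ map trT D1) A (map trT D2) B)). fromIH IH.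
  - apply F_boxR. fromIH IH.
  - via ltac:(apply (F_diamL false (trK K) (fbangs z ++ map trT D1) A (map trT D2) B)). fromIH IH.
  - via ltac:(apply (F_diamR false (trM X) A IH)).
  - via ltac:(apply (F_mv_r (trK K) (map trT G1) [A] (fbangs z) (map trT G2))). fromIH IH.
  - via ltac:(apply (F_mv_l (trK K) (map trT G1) [A] (fbangs z) (map trT G2))).
    via ltac:(apply (F_bangL false (trK K) (fbangs z ++ map trT G1) A (map trT G2) B)). fromIH IH.
  - eapply F_eq; [apply (F_bangR false z B nz); fromIH IH | fe2].
  - assert (P1 : Permutation (z2 ++ z1 ++ z') (z1 ++ z2 ++ z')).
    { rewrite !app_assoc. apply Permutation_app_tail. apply Permutation_app_comm. }
    via ltac:(apply (F_perm (trK K) _ _ P1 [] (map trT G1 ++ map trT G2 ++ map trT G3))).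
    via ltac:(apply (F_mv_l (trK K) (map trT G1) z' (fbangs z2 ++ fbangs z1) (map trT G2 ++ map trT G3))).
    via ltac:(apply (F_bangC false (trK K) z2 (fbangs z1 ++ map trT G1) (fbangs z' ++ map trT G2) (map trT G3) C nz)).
    via ltac:(apply (F_perm (fkapp (trK K) (FIn (fbangs z2 ++ fbangs z1 ++ map trT G1) FHole (map trT G3))) (z' ++ z2) (z2 ++ z') (Permutation_app_comm _ _) [] (map trT G2))).
    via ltac:(apply (F_perm (trK K) (z1 ++ z2) (z2 ++ z1) (Permutation_app_comm _ _) []
      (map trT G1 ++ FB (fbangs (z' ++ z2) ++ map trT G2) :: map trT G3))).
    fromIH IH.
  - discriminate.
Qed.

Lemma F_mono X C : F_der false X C -> F_der true X C.
Proof.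
  induction 1.
  - apply F_ax.
  - apply F_oneR.
  - eapply F_overL; eauto.
  - eapply F_overR; eauto.
  - eapply F_underL; eauto.
  - eapply F_underR; eauto.
  - eapply F_prodL; eauto.
  - eapply F_prodR; eauto.
  - eapply F_oneL; eauto.
  - eapply F_orL; eauto.
  - eapply F_orR1; eauto.
  - eapply F_orR2; eauto.
  - eapply F_andL1; eauto.
  - eapply F_andL2; eauto.
  - eapply F_andR; eauto.
  - eapply F_boxL; eauto.
  - eapply F_boxR; eauto.
  - eapply F_diamL; eauto.
  - eapply F_diamR; eauto.
  - eapply F_bangL; eauto.
  - eapply F_bangP1; eauto.
  - eapply F_bangP2; eauto.
  - eapply F_bangR; eauto.
  - eapply F_bangC; eauto.
  - discriminate.
Qed.

Lemma M_mono X C : M_der false X C -> M_der true X C.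
Proof.
  induction 1.
  - eapply M_mset; eauto.
  - apply M_ax.
  - apply M_oneR.
  - eapply M_overL; eauto.
  - eapply M_overR; eauto.
  - eapply M_underL; eauto.
  - eapply M_underR; eauto.
  - eapply M_prodL; eauto.
  - eapply M_prodR; eauto.
  - eapply M_oneL; eauto.
  - eapply M_orL; eauto.
  - eapply M_orR1; eauto.
  - eapply M_orR2; eauto.
  - eapply M_andL1; eauto.
  - eapply M_andL2; eauto.
  - eapply M_andR; eauto.
  - eapply M_boxL; eauto.
  - eapply M_boxR; eauto.
  - eapply M_diamL; eauto.
  - eapply M_diamR; eauto.
  - eapply M_bangL; eauto.
  - eapply M_bangP; eauto.
  - eapply M_bangR; eauto.
  - eapply M_bangC; eauto.
  - discriminate.
Qed.

Fixpoint mS_emb (t : ftt) : mS (emb_tt t) = fS t :=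
  match t return mS (emb_tt t) = fS t with
  | FF A => eq_refl
  | FB G => f_equal (SB zero)
      ((fix go (G : list ftt) : map mS (map emb_tt G) = map fS G :=
          match G with [] => eq_refl | t :: G => f_equal2 cons (mS_emb t) (go G) end) G)
  end.

Lemma mM_emb X : mM (emb X) = (zero, map fS X).
Proof.
  unfold mM, emb; simpl. f_equal. induction X; simpl; auto. rewrite mS_emb, IHX. auto.
Qed.

Fixpoint trT_emb (t : ftt) : trT (emb_tt t) = t :=
  match t return trT (emb_tt t) = t with
  | FF A => eq_refl
  | FB G => f_equal FB
      ((fix go (G : list ftt) : map trT (map emb_tt G) = G :=
          match G with [] => eq_refl | t :: G => f_equal2 cons (trT_emb t) (go G) end) G)
  end.

Lemma trM_emb X : trM (emb X) = X.
Proof. unfold trM, emb; simpl. induction X; simpl; auto. rewrite trT_emb, IHX. auto. Qed.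

Lemma S_to_Mf X C : S0 (zero, map fS X) C -> M_der false (emb X) C.
Proof. intros d. apply (S_to_M _ _ d). apply mM_emb. Qed.

Lemma Mf_to_Ff X C : M_der false (emb X) C -> F_der false X C.
Proof. intros d. rewrite <- (trM_emb X). apply M_to_F. exact d. Qed.

Theorem proposition2 (X : list ftt) (C : formula) :
  (F_der false X C <-> F_der true X C) /\
  (F_der true X C <-> M_der true (emb X) C) /\
  (M_der true (emb X) C <-> M_der false (emb X) C).
Proof.
  assert (MtMf : M_der true (emb X) C -> M_der false (emb X) C).
  { intros d. apply M_to_S in d. rewrite mM_emb in d. apply S_to_Mf. exact d. }
  assert (FtMf : F_der true X C -> M_der false (emb X) C).
  { intros d. apply F_to_S in d. apply S_to_Mf. exact d. }
  split; [|split]; split; intros d.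
  - apply F_mono; auto.
  - apply Mf_to_Ff. apply FtMf. exact d.
  - apply M_mono. apply FtMf. exact d.
  - apply F_mono. apply Mf_to_Ff. apply MtMf. exact d.
  - apply MtMf. exact d.
  - apply M_mono. exact d.
Qed.
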